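(* Let $J\subset\mathbb{C}$ be a $C^1$ Jordan curve, i.e. $J=\gamma(\mathbb{R}/2\pi\mathbb{Z})$ for an injective $C^1$ map $\gamma:\mathbb{R}/2\pi\mathbb{Z}\to\mathbb{C}$ with $\gamma'\neq0$, and let $n\ge3$. Let \[ W=\Big\{(a_1,\dots,a_n)\in\mathbb{R}_{+}^n:\ a_i<\sum\nolimits_{j\ne i}a_j \text{ for } i=1,\dots,n\Big\}. \] Then for every $A_0\in J$ (reparametrize so that $\gamma(0)=A_0$) and for Lebesgue-almost every $(a_1,\dots,a_n)\in W$, the set of tuples $(\sigma_1,\dots,\sigma_{n-1},\lambda)$ with $0<\sigma_1<\dots<\sigma_{n-1}<2\pi$, $\lambda>0$ and \[ |\gamma(\sigma_i)-\gamma(\sigma_{i-1})|=\lambda a_i\quad (i=1,\dots,n),\qquad \sigma_0=0,\ \sigma_n=2\pi, \] is finite. That is, there are at most finitely many neatly $J$-cyclic polygons with starting vertex $A_0$ and side lengths $a_1,\dots,a_n$.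
   Context: A polygon $Q_n=A_0\cdots A_{n-1}$ is neatly $J$-cyclic (for an oriented Jordan curve $J$) if it has a similar copy whose vertices lie on $J$ in this order according to the orientation of $J$; here its starting vertex on $J$ is required to be $A_0$. *)

(* Defs.v *)
(* concrete reals R. The plane C is modelled as R x R,
   a curve gamma as its two coordinate functions gx, gy : R -> R. *)
From Stdlib Require Import Reals Lra List.
Open Scope R_scope.

Definition C1_jordan_param (gx gy gx' gy' : R -> R) : Prop :=
  (forall t, derivable_pt_lim gx t (gx' t)) /\
  (forall t, derivable_pt_lim gy t (gy' t)) /\
  continuity gx' /\ continuity gy' /\
  (forall t, gx' t <> 0 \/ gy' t <> 0) /\
  (forall t, gx (t + 2 * PI) = gx t /\ gy (t + 2 * PI) = gy t) /\
  (forall s t, 0 <= s < 2 * PI -> 0 <= t < 2 * PI ->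
     gx s = gx t -> gy s = gy t -> s = t).

Definition gdist (gx gy : R -> R) (s t : R) : R :=
  sqrt ((gx s - gx t) ^ 2 + (gy s - gy t) ^ 2).

(* Side lengths (a_1,...,a_n) are stored as a 0, ..., a (n-1).
   W = positive vectors satisfying the strict polygon inequalities. *)
Fixpoint sum_first (n : nat) (a : nat -> R) : R :=
  match n with O => 0 | S m => sum_first m a + a m end.

Definition in_W (n : nat) (a : nat -> R) : Prop :=
  (forall i, (i < n)%nat -> 0 < a i) /\
  (forall i, (i < n)%nat -> a i < sum_first n a - a i).

(* Lebesgue null sets in R^n (a vector = first n coordinates of a
   function nat -> R): for every eps > 0, a countable family of closed
   boxes covering the set with total volume <= eps. *)
Fixpoint prod_first (n : nat) (f : nat -> R) : R :=
  match n with O => 1 | S m => prod_first m f * f m end.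

Fixpoint sum_boxes (m : nat) (v : nat -> R) : R :=
  match m with O => 0 | S k => sum_boxes k v + v k end.

Definition lebesgue_null (n : nat) (N : (nat -> R) -> Prop) : Prop :=
  forall eps, 0 < eps ->
    exists lo hi : nat -> nat -> R,
      (forall k i, lo k i <= hi k i) /\
      (forall v, N v -> exists k, forall i, (i < n)%nat ->
                                  lo k i <= v i <= hi k i) /\
      (forall m, sum_boxes m (fun k => prod_first n (fun i => hi k i - lo k i))
                 <= eps).

Definition neat_config (gx gy : R -> R) (n : nat) (a : nat -> R)
    (sigma : list R) (lam : R) : Prop :=
  length sigma = S n /\
  nth 0 sigma 0 = 0 /\ nth n sigma 0 = 2 * PI /\
  (forall i, (i < n)%nat -> nth i sigma 0 < nth (S i) sigma 0) /\
  0 < lam /\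
  (forall i, (i < n)%nat ->
     gdist gx gy (nth (S i) sigma 0) (nth i sigma 0) = lam * a i).

(* Main.v *)
Require Import Defs.
From Stdlib Require Import Reals Lra Lia List Classical IndefiniteDescription FunctionalExtensionality ZArith Rgeom.
Open Scope R_scope.


Lemma fchoice {A B : Type} (P : A -> B -> Prop) :
  (forall a, exists b, P a b) -> exists f : A -> B, forall a, P a (f a).
Proof.
  intros H. exists (fun a => proj1_sig (constructive_indefinite_description _ (H a))).
  intros a. exact (proj2_sig (constructive_indefinite_description _ (H a))).
Qed.

Lemma sum_boxes_nonneg m v : (forall k, 0 <= v k) -> 0 <= sum_boxes m v.
Proof. intros H; induction m; simpl; [lra| specialize (H m); lra]. Qed.

Lemma sum_boxes_mono_m m m' v : (forall k, 0 <= v k) -> (m <= m')%nat ->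
  sum_boxes m v <= sum_boxes m' v.
Proof.
  intros H Hm; induction Hm; [lra|]. simpl. specialize (H m0); lra.
Qed.

Lemma sum_boxes_split a b f :
  sum_boxes (a + b) f = sum_boxes a f + sum_boxes b (fun k => f (a + k)%nat).
Proof.
  induction b; simpl. rewrite Nat.add_0_r; lra.
  rewrite Nat.add_succ_r; simpl. rewrite IHb. lra.
Qed.

Lemma sum_boxes_ext m f g : (forall k, (k < m)%nat -> f k = g k) ->
  sum_boxes m f = sum_boxes m g.
Proof.
  induction m; intros H; simpl; auto.
  rewrite IHm by (intros; apply H; lia). rewrite (H m) by lia. reflexivity.
Qed.

Lemma sum_boxes_le m f g : (forall k, (k < m)%nat -> f k <= g k) ->
  sum_boxes m f <= sum_boxes m g.
Proof.
  induction m; intros H; simpl; [lra|].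
  assert (sum_boxes m f <= sum_boxes m g) by (apply IHm; intros; apply H; lia).
  specialize (H m ltac:(lia)); lra.
Qed.

Lemma sum_boxes_count m T V v : (forall k, 0 <= v k) -> (forall k, v k <= V) ->
  (forall k, (T <= k)%nat -> v k = 0) -> sum_boxes m v <= INR T * V.
Proof.
  intros H0 H1 H2.
  assert (HV : 0 <= V) by (specialize (H0 O); specialize (H1 O); lra).
  assert (forall m, sum_boxes m v <= INR (Nat.min m T) * V).
  { induction m0; cbn [sum_boxes]. simpl; rewrite Rmult_0_l; lra.
    destruct (Nat.le_gt_cases T m0).
    - rewrite H2 by lia. rewrite Nat.min_r by lia. rewrite Nat.min_r in IHm0 by lia. lra.
    - rewrite Nat.min_l by lia. rewrite Nat.min_l in IHm0 by lia.
      rewrite S_INR. specialize (H1 m0). lra. }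
  eapply Rle_trans; [apply H|]. apply Rmult_le_compat_r; auto.
  apply le_INR; lia.
Qed.

Lemma prod_first_nonneg n f : (forall i, (i < n)%nat -> 0 <= f i) -> 0 <= prod_first n f.
Proof.
  induction n; intros H; simpl; [lra|].
  apply Rmult_le_pos; [apply IHn; intros; apply H; lia| apply H; lia].
Qed.

Lemma prod_first_le_pow n f c : (forall i, (i < n)%nat -> 0 <= f i <= c) ->
  prod_first n f <= c ^ n.
Proof.
  induction n; intros H; simpl; [lra|].
  rewrite (Rmult_comm c). apply Rmult_le_compat.
  - apply prod_first_nonneg; intros; apply H; lia.
  - apply H; lia.
  - apply IHn; intros; apply H; lia.
  - apply H; lia.
Qed.

Lemma prod_first_scale n f g c : 0 <= c ->
  (forall i, (i < n)%nat -> 0 <= f i <= c * g i) ->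
  prod_first n f <= c ^ n * prod_first n g.
Proof.
  intros Hc. induction n; intros H; simpl; [lra|].
  assert (A1: prod_first n f <= c ^ n * prod_first n g) by (apply IHn; intros; apply H; lia).
  assert (A2: 0 <= prod_first n f) by (apply prod_first_nonneg; intros; apply H; lia).
  specialize (H n ltac:(lia)).
  replace (c * c ^ n * (prod_first n g * g n)) with ((c ^ n * prod_first n g) * (c * g n)) by ring.
  apply Rmult_le_compat; lra.
Qed.

Lemma prod_first_zero n f : (0 < n)%nat -> (forall i, (i<n)%nat -> f i = 0) -> prod_first n f = 0.
Proof. destruct n; intros; [lia|]. simpl. rewrite H0 by lia. ring. Qed.

Definition finnull (n : nat) (N : (nat -> R) -> Prop) : Prop :=
  forall eps, 0 < eps ->
    exists (T : nat) (lo hi : nat -> nat -> R),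
      (0 < T)%nat /\
      (forall k i, lo k i <= hi k i) /\
      (forall v, N v -> exists k, (k < T)%nat /\ forall i, (i < n)%nat -> lo k i <= v i <= hi k i) /\
      sum_boxes T (fun k => prod_first n (fun i => hi k i - lo k i)) <= eps.

Lemma lebesgue_null_mono n (N N' : (nat -> R) -> Prop) :
  (forall v, N v -> N' v) -> lebesgue_null n N' -> lebesgue_null n N.
Proof.
  intros H HN eps Heps. destruct (HN eps Heps) as (lo & hi & H1 & H2 & H3).
  exists lo, hi; repeat split; auto.
Qed.

Section Union.
Variable T : nat -> nat.
Fixpoint offs (j0 J : nat) : nat :=
  match J with O => O | S J' => (T j0 + offs (S j0) J')%nat end.
Fixpoint fnd (fuel k j : nat) : nat * nat :=
  match fuel with O => (j, k)
  | S f => if Nat.ltb k (T j) then (j, k) else fnd f (k - T j)%nat (S j) end.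

Lemma offs_S j0 J : offs j0 (S J) = (offs j0 J + T (j0 + J))%nat.
Proof.
  revert j0; induction J; intros j0. simpl. rewrite !Nat.add_0_r; lia.
  change (offs j0 (S (S J))) with (T j0 + offs (S j0) (S J))%nat.
  rewrite IHJ. simpl. rewrite Nat.add_succ_r. lia.
Qed.

Lemma offs_ge (HT : forall j, (1 <= T j)%nat) j0 J : (J <= offs j0 J)%nat.
Proof. revert j0; induction J; intros j0; simpl; [lia|]. specialize (IHJ (S j0)); specialize (HT j0); lia. Qed.

Lemma fnd_spec J : forall j0 l fuel, (l < T (j0 + J))%nat -> (J < fuel)%nat ->
  fnd fuel (offs j0 J + l) j0 = ((j0 + J)%nat, l).
Proof.
  induction J; intros j0 l fuel Hl Hf; destruct fuel as [|f]; try lia; simpl.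
  - rewrite Nat.add_0_r in Hl |- *. replace (Nat.ltb l (T j0)) with true; auto.
    symmetry; apply Nat.ltb_lt; auto.
  - replace (Nat.ltb (T j0 + offs (S j0) J + l) (T j0)) with false
      by (symmetry; apply Nat.ltb_ge; lia).
    replace (T j0 + offs (S j0) J + l - T j0)%nat with (offs (S j0) J + l)%nat by lia.
    rewrite IHJ; [f_equal; lia| rewrite Nat.add_succ_comm; auto| lia].
Qed.
End Union.

Lemma geom_sum eps J : sum_boxes J (fun j => eps / 2 ^ (S j)) = eps - eps / 2 ^ J.
Proof.
  induction J; cbn [sum_boxes]. simpl; field. rewrite IHJ. simpl. field. apply pow_nonzero; lra.
Qed.

Lemma union_null n (SS : nat -> (nat -> R) -> Prop) :
  (forall J, finnull n (SS J)) -> lebesgue_null n (fun v => exists J, SS J v).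
Proof.
  intros H eps Heps.
  assert (E: forall J, exists t : nat * (nat -> nat -> R) * (nat -> nat -> R),
    let '(T, lo, hi) := t in
      (0 < T)%nat /\ (forall k i, lo k i <= hi k i) /\
      (forall v, SS J v -> exists k, (k < T)%nat /\ forall i, (i < n)%nat -> lo k i <= v i <= hi k i) /\
      sum_boxes T (fun k => prod_first n (fun i => hi k i - lo k i)) <= eps / 2 ^ (S J)).
  { intros J. assert (0 < eps / 2 ^ S J) by (apply Rdiv_lt_0_compat; [lra| apply pow_lt; lra]).
    destruct (H J _ H0) as (T & lo & hi & ?). exists (T, lo, hi). exact H1. }
  apply fchoice in E. destruct E as [F HF].
  set (T := fun J => fst (fst (F J))).
  set (LO := fun J => snd (fst (F J))).
  set (HI := fun J => snd (F J)).
  assert (HF' : forall J, (0 < T J)%nat /\ (forall k i, LO J k i <= HI J k i) /\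
      (forall v, SS J v -> exists k, (k < T J)%nat /\ forall i, (i < n)%nat -> LO J k i <= v i <= HI J k i) /\
      sum_boxes (T J) (fun k => prod_first n (fun i => HI J k i - LO J k i)) <= eps / 2 ^ (S J)).
  { intros J. specialize (HF J). unfold T, LO, HI. destruct (F J) as [[a b] c]. exact HF. }
  clear HF.
  assert (HT1 : forall j, (1 <= T j)%nat) by (intros j; destruct (HF' j); lia).
  set (lo := fun k i => let p := fnd T (S k) k 0 in LO (fst p) (snd p) i).
  set (hi := fun k i => let p := fnd T (S k) k 0 in HI (fst p) (snd p) i).
  assert (Hfnd : forall J l, (l < T J)%nat ->
     fnd T (S (offs T 0 J + l)) (offs T 0 J + l) 0 = (J, l)).
  { intros J l Hl. rewrite fnd_spec; auto. pose proof (offs_ge T HT1 0 J). lia. }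
  set (V := fun k => prod_first n (fun i => hi k i - lo k i)).
  assert (HV0 : forall k, 0 <= V k).
  { intros k; unfold V; apply prod_first_nonneg; intros i _. unfold hi, lo.
    destruct (HF' (fst (fnd T (S k) k 0))) as (_ & Hle & _). specialize (Hle (snd (fnd T (S k) k 0)) i). lra. }
  exists lo, hi. split; [|split].
  - intros k i. unfold lo, hi. destruct (HF' (fst (fnd T (S k) k 0))) as (_ & Hle & _). apply Hle.
  - intros v [J HJ]. destruct (HF' J) as (_ & _ & Hc & _). destruct (Hc v HJ) as (l & Hl & Hb).
    exists (offs T 0 J + l)%nat. intros i Hi. unfold lo, hi. rewrite Hfnd by auto. simpl. auto.
  - intros m.
    assert (Hsum : forall J, sum_boxes (offs T 0 J) V = sum_boxes J (fun j => sum_boxes (T j) (fun k => prod_first n (fun i => HI j k i - LO j k i)))).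
    { induction J. reflexivity. rewrite offs_S. rewrite sum_boxes_split. simpl. rewrite IHJ. f_equal.
      apply sum_boxes_ext. intros k Hk. unfold V, hi, lo. rewrite Hfnd by auto. reflexivity. }
    apply Rle_trans with (sum_boxes (offs T 0 m) V).
    + apply sum_boxes_mono_m; auto. apply offs_ge; auto.
    + rewrite Hsum. apply Rle_trans with (sum_boxes m (fun j => eps / 2 ^ S j)).
      * apply sum_boxes_le. intros k _. apply (HF' k).
      * rewrite geom_sum. assert (0 < eps / 2 ^ m) by (apply Rdiv_lt_0_compat; [lra| apply pow_lt; lra]). lra.
Qed.

Lemma sqrt_diff_bound A B rho : 0 < rho -> rho^2 <= A -> A <= B ->
  0 <= sqrt B - sqrt A <= (1 / (2 * rho)) * (B - A).
Proof.
  intros Hr HA HB.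
  assert (sA : sqrt A * sqrt A = A) by (apply sqrt_sqrt; nra).
  assert (sB : sqrt B * sqrt B = B) by (apply sqrt_sqrt; nra).
  assert (rA : rho <= sqrt A).
  { rewrite <- (sqrt_pow2 rho) by lra. apply sqrt_le_1_alt. lra. }
  assert (AB : sqrt A <= sqrt B) by (apply sqrt_le_1_alt; lra).
  split; [lra|].
  unfold Rdiv. rewrite Rmult_1_l.
  apply Rmult_le_reg_l with (2 * rho); [lra|].
  rewrite <- Rmult_assoc, Rinv_r, Rmult_1_l by lra.
  nra.
Qed.

Lemma transport_sq n (N : (nat -> R) -> Prop) rho : 0 < rho -> finnull n N ->
  finnull n (fun a => (forall i, (i < n)%nat -> rho <= a i) /\ N (fun i => a i ^ 2)).
Proof.
  intros Hr HN eps Heps.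
  assert (Hc : 0 < (2 * rho) ^ n) by (apply pow_lt; lra).
  destruct (HN (eps * (2 * rho) ^ n) ltac:(nra)) as (T & lo & hi & HT & Hle & Hcov & Hsum).
  exists T, (fun k i => sqrt (Rmax (lo k i) (rho ^ 2))), (fun k i => sqrt (Rmax (hi k i) (rho ^ 2))).
  split; [auto|split; [|split]].
  - intros k i. apply sqrt_le_1_alt. specialize (Hle k i). unfold Rmax; repeat destruct Rle_dec; lra.
  - intros a [Ha Hna]. destruct (Hcov _ Hna) as (k & Hk & Hb). exists k; split; auto.
    intros i Hi. specialize (Hb i Hi). specialize (Ha i Hi). simpl in Hb.
    assert (Hsq : sqrt (a i ^ 2) = a i) by (apply sqrt_pow2; lra).
    split.
    + rewrite <- Hsq. apply sqrt_le_1_alt. unfold Rmax; destruct Rle_dec; nra.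
    + rewrite <- Hsq. apply sqrt_le_1_alt. unfold Rmax; destruct Rle_dec; nra.
  - eapply Rle_trans.
    + apply sum_boxes_le. intros k _.
      apply (prod_first_scale n _ (fun i => hi k i - lo k i) (1 / (2 * rho))).
      * apply Rlt_le, Rdiv_lt_0_compat; lra.
      * intros i _. specialize (Hle k i).
        assert (H1 : rho ^ 2 <= Rmax (lo k i) (rho ^ 2)) by apply Rmax_r.
        assert (H2 : Rmax (lo k i) (rho ^ 2) <= Rmax (hi k i) (rho ^ 2)) by (unfold Rmax; repeat destruct Rle_dec; lra).
        assert (H3 : Rmax (hi k i) (rho ^ 2) - Rmax (lo k i) (rho ^ 2) <= hi k i - lo k i) by (unfold Rmax; repeat destruct Rle_dec; lra).
        pose proof (sqrt_diff_bound _ _ _ Hr H1 H2).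
        assert (0 <= 1 / (2 * rho)) by (apply Rlt_le, Rdiv_lt_0_compat; lra).
        split; [lra|]. eapply Rle_trans; [apply H|]. apply Rmult_le_compat_l; lra.
    + assert (E : forall m, sum_boxes m (fun k => (1 / (2 * rho)) ^ n * prod_first n (fun i => hi k i - lo k i)) =
         (1 / (2 * rho)) ^ n * sum_boxes m (fun k => prod_first n (fun i => hi k i - lo k i))).
      { induction m; simpl; [ring| rewrite IHm; ring]. }
      rewrite E. unfold Rdiv. rewrite Rmult_1_l, pow_inv.
      apply Rmult_le_reg_l with ((2 * rho) ^ n); auto.
      rewrite <- Rmult_assoc, Rinv_r, Rmult_1_l by lra. lra.
Qed.

Fixpoint dec (b d t : nat) : nat :=
  match t with O => Nat.modulo d b | S t' => dec b (Nat.div d b) t' end.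

Lemma dec_lt b d t : (0 < b)%nat -> (dec b d t < b)%nat.
Proof. revert d; induction t; intros d Hb; simpl; [apply Nat.mod_upper_bound; lia| auto]. Qed.

Lemma enc_exists b : (0 < b)%nat -> forall N (f : nat -> nat), (forall t, (t < N)%nat -> (f t < b)%nat) ->
  exists d, (d < b ^ N)%nat /\ forall t, (t < N)%nat -> dec b d t = f t.
Proof.
  intros Hb N. induction N; intros f Hf.
  - exists O. split; simpl; [lia| intros; lia].
  - destruct (IHN (fun t => f (S t))) as (d' & Hd' & Hdec); [intros; apply Hf; lia|].
    exists (f O + b * d')%nat. split.
    + simpl. specialize (Hf O ltac:(lia)). nia.
    + intros t Ht. destruct t; simpl.
      * rewrite Nat.mul_comm, Nat.Div0.mod_add. apply Nat.mod_small. apply Hf; lia.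
      * rewrite Nat.mul_comm, Nat.add_comm, Nat.div_add_l by lia.
        rewrite Nat.div_small by (apply Hf; lia). rewrite Nat.add_0_r. apply Hdec; lia.
Qed.

Lemma digit_exists q h t : (1 <= q)%nat -> 0 < h -> 0 <= t <= INR q * h ->
  exists e, (e < q)%nat /\ INR e * h <= t <= (INR e + 1) * h.
Proof.
  intros Hq Hh. induction Hq; intros Ht.
  - exists O. simpl in *. split; [lia| lra].
  - destruct (Rle_dec t (INR m * h)).
    + destruct IHHq as (e & He & Hb); [lra|]. exists e; split; [lia| auto].
    + exists m. split; [lia|]. rewrite S_INR in Ht. lra.
Qed.

Lemma argmax_exists n (f : nat -> R) : (0 < n)%nat ->
  exists j, (j < n)%nat /\ forall i, (i < n)%nat -> f i <= f j.
Proof.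
  intros Hn. induction n; [lia|].
  destruct n.
  - exists O. split; [lia|]. intros i Hi. replace i with O by lia. lra.
  - destruct IHn as (j & Hj & Hmax); [lia|].
    destruct (Rle_dec (f j) (f (S n))).
    + exists (S n). split; [lia|]. intros i Hi. destruct (Nat.eq_dec i (S n)); [subst; lra|].
      specialize (Hmax i ltac:(lia)); lra.
    + exists j. split; [lia|]. intros i Hi. destruct (Nat.eq_dec i (S n)); [subst; lra|].
      apply Hmax; lia.
Qed.

Lemma sum_boxes_const m V : sum_boxes m (fun _ => V) = INR m * V.
Proof. induction m; cbn [sum_boxes]; [simpl; ring|]. rewrite IHm, S_INR; ring. Qed.

Lemma pigeon {A : Type} M (l : list A) (f : A -> nat) :
  NoDup l -> (forall a, In a l -> (f a < M)%nat) -> (M < length l)%nat ->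
  exists a b, In a l /\ In b l /\ a <> b /\ f a = f b.
Proof.
  intros Hnd Hf Hlen. apply NNPP. intros Hno.
  assert (Hnd2 : NoDup (map f l)).
  { apply NoDup_map_NoDup_ForallPairs; auto. intros a b Ha Hb Hab.
    apply NNPP; intros Hne. apply Hno. exists a, b; auto. }
  assert (Hinc : incl (map f l) (seq 0 M)).
  { intros c Hc. apply in_map_iff in Hc. destruct Hc as (a & <- & Ha). apply in_seq. specialize (Hf a Ha). lia. }
  pose proof (NoDup_incl_length Hnd2 Hinc). rewrite length_map, length_seq in H. lia.
Qed.

Definition inK n S (x : nat -> R) := forall i, (i < n)%nat -> 0 <= x i <= S.
Definition near1 n S (x : nat -> R) := forall i, (i < n)%nat -> -1 <= x i <= S + 1.
Definition close n (x y : nat -> R) r := forall i, (i < n)%nat -> Rabs (x i - y i) <= r.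
Definition canon n (x : nat -> R) := forall k, (n <= k)%nat -> x k = 0.

Lemma Rabs_le_between a b : Rabs a <= b -> - b <= a <= b.
Proof. unfold Rabs; destruct Rcase_abs; lra. Qed.

Lemma Rabs_div a b : b <> 0 -> Rabs (a / b) = Rabs a / Rabs b.
Proof. intros; unfold Rdiv; rewrite Rabs_mult, Rabs_inv; reflexivity. Qed.

Lemma near1_of_close n Sz x y r : inK n Sz x -> close n y x r -> r <= 1 -> near1 n Sz y.
Proof.
  intros Hx Hc Hr i Hi. specialize (Hx i Hi). specialize (Hc i Hi).
  apply Rabs_le_between in Hc. lra.
Qed.

Section Local.
Variables (n : nat) (Sz L : R) (G : (nat -> R) -> (nat -> R)).
Hypothesis Hn : (0 < n)%nat.
Hypothesis HL : 0 <= L.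
Hypothesis HLip : forall x y r, near1 n Sz x -> near1 n Sz y -> close n x y r ->
  forall i, (i < n)%nat -> Rabs (G x i - G y i) <= L * r.

Lemma local_cover (eps del w : R) (q : nat) (Dp : (nat -> R) -> (nat -> R)) (x x' : nat -> R) :
  0 < eps -> 0 < w -> 2 * w <= del -> del <= 1 -> (1 <= q)%nat -> inK n Sz x ->
  (forall c v i, Dp (fun k => c * v k) i = c * Dp v i) ->
  (forall y z r, close n y x del -> close n z x del -> close n y z r ->
     forall i, (i < n)%nat -> Rabs (G y i - G z i - Dp (fun k => y k - z k) i) <= eps * r) ->
  close n x' x w -> (exists i, (i < n)%nat /\ x i <> x' i) -> (forall i, (i < n)%nat -> G x i = G x' i) ->
  exists blo bhi : nat -> nat -> R,
    (forall d i, blo d i <= bhi d i) /\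
    (forall d, prod_first n (fun i => bhi d i - blo d i) <= (2 * (L * (2 * w / INR q) + 2 * eps * w)) ^ n) /\
    forall z, close n z x w -> exists d, (d < q ^ (n - 1))%nat /\
      forall i, (i < n)%nat -> blo d i <= G z i <= bhi d i.
Proof.
  intros Heps Hw Hwd Hd1 Hq HxK Hhom Happ Hx'x [i0 [Hi0 Hne]] HGeq.
  assert (Hqpos : 0 < INR q) by (apply lt_0_INR; lia).
  set (u := fun k => x k - x' k).
  destruct (argmax_exists n (fun k => Rabs (u k)) Hn) as (j & Hj & Hmax).
  assert (Hu : 0 < Rabs (u j)).
  { specialize (Hmax i0 Hi0). assert (0 < Rabs (u i0)) by (apply Rabs_pos_lt; unfold u; lra). lra. }
  assert (Huj : u j <> 0) by (intros E; rewrite E, Rabs_R0 in Hu; lra).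
  assert (HDu : forall i, (i < n)%nat -> Rabs (Dp u i) <= eps * Rabs (u j)).
  { intros i Hi.
    assert (A1 : close n x x del) by (intros k _; rewrite Rminus_diag, Rabs_R0; lra).
    assert (A2 : close n x' x del) by (intros k Hk; specialize (Hx'x k Hk); lra).
    assert (A3 : close n x x' (Rabs (u j))) by (intros k Hk; apply (Hmax k Hk)).
    pose proof (Happ x x' _ A1 A2 A3 i Hi) as H. rewrite (HGeq i Hi) in H.
    replace (G x' i - G x' i - Dp (fun k => x k - x' k) i) with (- Dp u i) in H by (unfold u; ring).
    rewrite Rabs_Ropp in H. exact H. }
  set (rho := L * (2 * w / INR q) + 2 * eps * w).
  assert (Hrho : 0 <= rho).
  { unfold rho. assert (0 <= 2 * w / INR q) by (apply Rlt_le, Rdiv_lt_0_compat; lra). nra. }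
  set (h := 4 * w / INR q).
  assert (Hh : 0 < h) by (apply Rdiv_lt_0_compat; lra).
  assert (Hqh : INR q * h = 4 * w) by (unfold h; field; lra).
  set (tix := fun k => if Nat.ltb k j then k else (k - 1)%nat).
  set (cen := fun d k => if Nat.eqb k j then x j else x k - 2 * w + (INR (dec q d (tix k)) + / 2) * h).
  exists (fun d i => G (cen d) i - rho), (fun d i => G (cen d) i + rho).
  split; [intros; lra| split].
  { intros d. apply prod_first_le_pow. intros i _. lra. }
  intros z Hz.
  set (tau := (z j - x j) / u j).
  set (v := fun k => z k - tau * u k).
  assert (Htu : forall k, (k < n)%nat -> Rabs (tau * u k) <= w).
  { intros k Hk. specialize (Hmax k Hk). specialize (Hz j Hj). simpl in Hmax.
    apply Rmult_le_reg_r with (Rabs (u j)); auto.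
    replace (Rabs (tau * u k) * Rabs (u j)) with (Rabs (z j - x j) * Rabs (u k)).
    - apply Rmult_le_compat; auto using Rabs_pos.
    - unfold tau. rewrite Rabs_mult, Rabs_div by auto. field. lra. }
  assert (Hzv : close n z v w).
  { intros k Hk. unfold v. replace (z k - (z k - tau * u k)) with (tau * u k) by ring. auto. }
  assert (Hvx : close n v x (2 * w)).
  { intros k Hk. unfold v. replace (z k - tau * u k - x k) with ((z k - x k) + - (tau * u k)) by ring.
    eapply Rle_trans; [apply Rabs_triang|]. rewrite Rabs_Ropp. specialize (Hz k Hk). specialize (Htu k Hk). lra. }
  assert (Hvj : v j = x j) by (unfold v, tau; field; auto).
  assert (HGzv : forall i, (i < n)%nat -> Rabs (G z i - G v i) <= 2 * eps * w).
  { intros i Hi.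
    assert (A1 : close n z x del) by (intros k Hk; specialize (Hz k Hk); lra).
    assert (A2 : close n v x del) by (intros k Hk; specialize (Hvx k Hk); lra).
    pose proof (Happ z v w A1 A2 Hzv i Hi) as H.
    assert (E : (fun k => z k - v k) = (fun k => tau * u k)) by (apply functional_extensionality; intros k; unfold v; ring).
    rewrite E, Hhom in H.
    assert (Rabs (tau * Dp u i) <= eps * w).
    { rewrite Rabs_mult. specialize (HDu i Hi). specialize (Hz j Hj).
      apply Rle_trans with (Rabs tau * (eps * Rabs (u j))); [apply Rmult_le_compat_l; auto using Rabs_pos|].
      replace (Rabs tau * (eps * Rabs (u j))) with (eps * Rabs (z j - x j)).
      - apply Rmult_le_compat_l; lra.
      - unfold tau. rewrite Rabs_div by auto. field. lra. }
    replace (G z i - G v i) with ((G z i - G v i - tau * Dp u i) + tau * Dp u i) by ring.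
    eapply Rle_trans; [apply Rabs_triang|]. lra. }
  assert (Hdig : forall k, exists e, ((k < n)%nat /\ k <> j) ->
     (e < q)%nat /\ INR e * h <= v k - x k + 2 * w <= (INR e + 1) * h).
  { intros k. destruct (classic ((k < n)%nat /\ k <> j)) as [[Hk Hkj]|Hno].
    - destruct (digit_exists q h (v k - x k + 2 * w)) as (e & He & Hb); auto.
      + specialize (Hvx k Hk). apply Rabs_le_between in Hvx. rewrite Hqh. lra.
      + exists e; auto.
    - exists O; intros; contradiction. }
  apply fchoice in Hdig. destruct Hdig as [e He].
  destruct (enc_exists q ltac:(lia) (n - 1) (fun t => e (if Nat.ltb t j then t else S t))) as (d & Hd & Hdec).
  { intros t Ht. destruct (Nat.ltb_spec t j); apply He; lia. }
  exists d. split; auto.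
  assert (Hdk : forall k, (k < n)%nat -> k <> j -> dec q d (tix k) = e k).
  { intros k Hk Hkj. unfold tix. destruct (Nat.ltb_spec k j).
    - rewrite Hdec by lia. destruct (Nat.ltb_spec k j); [reflexivity| lia].
    - rewrite Hdec by lia. destruct (Nat.ltb_spec (k - 1) j); [lia|]. f_equal; lia. }
  assert (Hcx : close n (cen d) x (2 * w)).
  { intros k Hk. unfold cen. destruct (Nat.eqb_spec k j).
    - subst. rewrite Rminus_diag, Rabs_R0; lra.
    - pose proof (dec_lt q d (tix k) ltac:(lia)).
      assert (INR (dec q d (tix k)) + 1 <= INR q) by (rewrite <- S_INR; apply le_INR; lia).
      pose proof (pos_INR (dec q d (tix k))).
      apply Rabs_le. split; nra. }
  assert (Hvc : close n v (cen d) (h / 2)).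
  { intros k Hk. unfold cen. destruct (Nat.eqb_spec k j).
    - subst. rewrite Hvj, Rminus_diag, Rabs_R0; lra.
    - rewrite Hdk by auto. destruct (He k (conj Hk n0)) as [_ Hb].
      apply Rabs_le. split; nra. }
  intros i Hi.
  assert (Hvc' : Rabs (G v i - G (cen d) i) <= L * (h / 2)).
  { apply HLip; auto.
    - apply (near1_of_close n Sz x v (2 * w)); auto; lra.
    - apply (near1_of_close n Sz x (cen d) (2 * w)); auto; lra. }
  assert (E : L * (h / 2) = L * (2 * w / INR q)) by (unfold h; field; lra).
  specialize (HGzv i Hi).
  assert (Rabs (G z i - G (cen d) i) <= rho).
  { replace (G z i - G (cen d) i) with ((G z i - G v i) + (G v i - G (cen d) i)) by ring.
    eapply Rle_trans; [apply Rabs_triang|]. unfold rho. lra. }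
  apply Rabs_le_between in H. lra.
Qed.
End Local.

Lemma nat_above r : 0 <= r -> exists N : nat, r <= INR N <= r + 1.
Proof.
  intros Hr. destruct (archimed r) as [H1 H2].
  assert (Hp : (0 < up r)%Z) by (apply lt_IZR; simpl; lra).
  exists (Z.to_nat (up r)). rewrite INR_IZR_INZ, Z2Nat.id by lia. lra.
Qed.

Section Sard.
Variables (n : nat) (Sz L : R) (G : (nat -> R) -> (nat -> R)).
Hypothesis Hn : (0 < n)%nat.
Hypothesis HL : 0 <= L.
Hypothesis HSz : 0 < Sz.
Hypothesis HLip : forall x y r, near1 n Sz x -> near1 n Sz y -> close n x y r ->
  forall i, (i < n)%nat -> Rabs (G x i - G y i) <= L * r.
Hypothesis HDiff : forall eps, 0 < eps -> exists del, 0 < del /\ del <= 1 /\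
  forall p, inK n Sz p -> exists Dp : (nat -> R) -> (nat -> R),
    (forall c v i, Dp (fun k => c * v k) i = c * Dp v i) /\
    (forall y z r, close n y p del -> close n z p del -> close n y z r ->
       forall i, (i < n)%nat -> Rabs (G y i - G z i - Dp (fun k => y k - z k) i) <= eps * r).

Theorem sard_finnull : finnull n (fun y => forall l : list (nat -> R), exists x,
   inK n Sz x /\ canon n x /\ (forall i, (i < n)%nat -> G x i = y i) /\ ~ In x l).
Proof.
  intros eps Heps.
  set (C := 2 ^ (n - 1) * (4 * Sz * (L + 1)) ^ n).
  assert (HC : 0 <= C) by (unfold C; apply Rmult_le_pos; apply pow_le; nra).
  set (ep := Rmin 1 (eps / (C + 1))).
  assert (Hep0 : 0 < ep) by (unfold ep; apply Rmin_pos; [lra| apply Rdiv_lt_0_compat; lra]).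
  assert (Hep1 : ep <= 1) by apply Rmin_l.
  assert (HepC : ep * C <= eps).
  { assert (ep <= eps / (C + 1)) by apply Rmin_r.
    apply Rle_trans with (eps / (C + 1) * C); [apply Rmult_le_compat_r; auto|].
    apply Rmult_le_reg_r with (C + 1); [lra|]. unfold Rdiv. field_simplify; nra. }
  destruct (HDiff ep Hep0) as (del & Hd0 & Hd1 & HD).
  destruct (nat_above (1 / ep)) as (q & Hq1 & Hq2).
  { apply Rlt_le, Rdiv_lt_0_compat; lra. }
  assert (Hinv : 1 <= 1 / ep) by (apply Rmult_le_reg_r with ep; auto; unfold Rdiv; field_simplify; lra).
  assert (Hq : (1 <= q)%nat) by (apply INR_le; simpl; lra).
  assert (Hqpos : 0 < INR q) by lra.
  assert (Hqe : 1 / INR q <= ep).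
  { apply Rmult_le_reg_r with (INR q); auto. unfold Rdiv. field_simplify; [|lra].
    apply Rmult_le_reg_r with (/ ep); [apply Rinv_0_lt_compat; lra|].
    field_simplify; lra. }
  assert (Hqe2 : INR q * ep <= 2).
  { apply Rle_trans with ((1 / ep + 1) * ep); [apply Rmult_le_compat_r; lra|].
    field_simplify; lra. }
  destruct (nat_above (2 * Sz / del)) as (m0 & Hm1 & _).
  { apply Rlt_le, Rdiv_lt_0_compat; lra. }
  set (m := S m0).
  assert (Hmpos : 0 < INR m) by (apply lt_0_INR; unfold m; lia).
  assert (HmN : (0 < m)%nat) by (unfold m; lia).
  assert (Hm : 2 * Sz / del <= INR m) by (unfold m; rewrite S_INR; lra).
  set (w := Sz / INR m).
  assert (Hw : 0 < w) by (apply Rdiv_lt_0_compat; lra).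
  assert (Hwd : 2 * w <= del).
  { assert (E : 2 * Sz = (2 * Sz / del) * del) by (field; lra).
    assert (2 * Sz <= del * INR m) by nra.
    unfold w. apply Rmult_le_reg_r with (INR m); auto.
    replace (2 * (Sz / INR m) * INR m) with (2 * Sz) by (field; lra). lra. }
  assert (Hmw : INR m * w = Sz) by (unfold w; field; lra).
  set (rmax := 2 * w * (L + 1) * ep).
  assert (Hrmax : 0 <= rmax) by (unfold rmax; assert (0 <= 2 * w * (L + 1)) by nra; nra).
  set (V := (2 * rmax) ^ n).
  set (Qn := (q ^ (n - 1))%nat).
  assert (HQn : (0 < Qn)%nat) by (unfold Qn; apply Nat.neq_0_lt_0, Nat.pow_nonzero; lia).
  set (inCube := fun c (z : nat -> R) => forall i, (i < n)%nat ->
     INR (dec m c i) * w <= z i <= (INR (dec m c i) + 1) * w).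
  assert (HF : forall c, exists bb : (nat -> nat -> R) * (nat -> nat -> R),
     (forall d i, fst bb d i <= snd bb d i) /\
     (forall d, prod_first n (fun i => snd bb d i - fst bb d i) <= V) /\
     ((exists x x', inK n Sz x /\ inK n Sz x' /\ inCube c x /\ inCube c x' /\
        (exists i, (i < n)%nat /\ x i <> x' i) /\ (forall i, (i < n)%nat -> G x i = G x' i)) ->
      forall z, inCube c z -> exists d, (d < Qn)%nat /\
        forall i, (i < n)%nat -> fst bb d i <= G z i <= snd bb d i)).
  { intros c. destruct (classic (exists x x', inK n Sz x /\ inK n Sz x' /\ inCube c x /\ inCube c x' /\
        (exists i, (i < n)%nat /\ x i <> x' i) /\ (forall i, (i < n)%nat -> G x i = G x' i))) as [Hcr|Hcr].
    - destruct Hcr as (x & x' & HxK & Hx'K & Hxc & Hx'c & Hne & Heq).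
      destruct (HD x HxK) as (Dp & Hhom & Happ).
      assert (Hx'x : close n x' x w).
      { intros i Hi. specialize (Hxc i Hi). specialize (Hx'c i Hi). apply Rabs_le. lra. }
      destruct (local_cover n Sz L G Hn HL HLip ep del w q Dp x x' Hep0 Hw Hwd Hd1 Hq HxK Hhom Happ Hx'x Hne Heq)
        as (blo & bhi & Hb1 & Hb2 & Hb3).
      exists (blo, bhi). simpl. split; [auto| split].
      + intros d. eapply Rle_trans; [apply Hb2|]. unfold V. apply pow_incr. split.
        * assert (0 <= 2 * w / INR q) by (apply Rlt_le, Rdiv_lt_0_compat; lra). nra.
        * assert (2 * w / INR q <= 2 * w * ep).
          { replace (2 * w / INR q) with (2 * w * (1 / INR q)) by (field; lra).
            apply Rmult_le_compat_l; lra. }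
          unfold rmax. nra.
      + intros _ z Hz. apply Hb3. intros i Hi. specialize (Hxc i Hi). specialize (Hz i Hi). apply Rabs_le. lra.
    - exists ((fun _ _ => 0), (fun _ _ => 0)). simpl. split; [intros; lra| split].
      + intros d. apply prod_first_le_pow. intros; lra.
      + intros Hc; contradiction. }
  apply fchoice in HF. destruct HF as [F HF].
  exists (m ^ n * Qn)%nat, (fun k i => fst (F (k / Qn)%nat) (k mod Qn)%nat i),
    (fun k i => snd (F (k / Qn)%nat) (k mod Qn)%nat i).
  split; [apply Nat.mul_pos_pos; auto; apply Nat.neq_0_lt_0, Nat.pow_nonzero; lia| split; [|split]].
  - intros k i. apply (HF (k / Qn)%nat).
  - intros y Hy.
    assert (Hlist : forall M, exists l, length l = M /\ NoDup l /\ forall x, In x l ->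
        inK n Sz x /\ canon n x /\ (forall i, (i < n)%nat -> G x i = y i)).
    { induction M.
      - exists nil. split; [reflexivity| split; [constructor| intros x Hx; destruct Hx]].
      - destruct IHM as (l & Hl & Hnd & Hin). destruct (Hy l) as (x & Hx1 & Hx2 & Hx3 & Hx4).
        exists (x :: l). split; [simpl; lia| split; [constructor; auto|]].
        intros z [<-|Hz]; auto. }
    destruct (Hlist (S (m ^ n))) as (l & Hl & Hnd & Hin).
    assert (Hcode : forall x, exists c, In x l -> (c < m ^ n)%nat /\ inCube c x).
    { intros x. destruct (classic (In x l)) as [Hx|Hx]; [|exists O; intros; contradiction].
      destruct (Hin x Hx) as (HxK & _ & _).
      assert (Hd : forall i, exists e, (i < n)%nat -> (e < m)%nat /\ INR e * w <= x i <= (INR e + 1) * w).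
      { intros i. destruct (classic (i < n)%nat) as [Hi|Hi]; [|exists O; intros; contradiction].
        destruct (digit_exists m w (x i)) as (e & He1 & He2); [lia| auto| rewrite Hmw; apply HxK; auto|].
        exists e; auto. }
      apply fchoice in Hd. destruct Hd as [e He].
      destruct (enc_exists m HmN n e) as (c & Hc1 & Hc2); [intros; apply He; auto|].
      exists c. intros _. split; auto. intros i Hi. rewrite Hc2 by auto. apply He; auto. }
    apply fchoice in Hcode. destruct Hcode as [f Hf].
    destruct (pigeon (m ^ n) l f Hnd) as (a & b & Ha & Hb & Hab & Hfab).
    { intros a Ha. apply Hf; auto. }
    { lia. }
    set (c := f a).
    destruct (Hin a Ha) as (HaK & Hac & HaG). destruct (Hin b Hb) as (HbK & Hbc & HbG).
    destruct (Hf a Ha) as (Hc & Hca). destruct (Hf b Hb) as (_ & Hcb). rewrite <- Hfab in Hcb.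
    assert (Hne : exists i, (i < n)%nat /\ a i <> b i).
    { apply NNPP. intros Hno. apply Hab. apply functional_extensionality. intros k.
      destruct (Nat.lt_ge_cases k n).
      - apply NNPP. intros Hk. apply Hno. exists k; auto.
      - rewrite Hac, Hbc by auto. reflexivity. }
    destruct (HF (f a)) as (_ & _ & Hcov).
    destruct (Hcov (ex_intro _ a (ex_intro _ b (conj HaK (conj HbK (conj Hca (conj Hcb (conj Hne
         (fun i Hi => eq_trans (HaG i Hi) (eq_sym (HbG i Hi)))))))))) a Hca) as (d & Hd & Hbox).
    exists (f a * Qn + d)%nat. split; [nia|].
    assert (E1 : ((f a * Qn + d) / Qn)%nat = f a).
    { rewrite Nat.div_add_l by lia. rewrite Nat.div_small by auto. lia. }
    assert (E2 : ((f a * Qn + d) mod Qn)%nat = d).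
    { rewrite Nat.add_comm, Nat.Div0.mod_add. apply Nat.mod_small; auto. }
    rewrite E1, E2. intros i Hi. rewrite <- (HaG i Hi). apply Hbox; auto.
  - eapply Rle_trans; [apply sum_boxes_le; intros k _; apply (HF (k / Qn)%nat)|].
    rewrite sum_boxes_const. rewrite mult_INR, pow_INR. unfold Qn. rewrite pow_INR.
    unfold V, rmax, w.
    destruct n as [|n']; [lia|]. replace (S n' - 1)%nat with n' by lia.
    replace (2 * (2 * (Sz / INR m) * (L + 1) * ep)) with ((4 * Sz * (L + 1) * ep) * / INR m) by (field; lra).
    rewrite Rpow_mult_distr, pow_inv.
    replace (INR m ^ S n' * INR q ^ n' * ((4 * Sz * (L + 1) * ep) ^ S n' * / INR m ^ S n'))
      with ((INR q * ep) ^ n' * ep * (4 * Sz * (L + 1)) ^ S n').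
    2:{ rewrite !Rpow_mult_distr. cbn [pow]. field. split; [apply pow_nonzero|]; lra. }
    apply Rle_trans with (ep * C); auto.
    unfold C. replace (S n' - 1)%nat with n' by lia.
    replace (ep * (2 ^ n' * (4 * Sz * (L + 1)) ^ S n')) with (2 ^ n' * ep * (4 * Sz * (L + 1)) ^ S n') by ring.
    apply Rmult_le_compat_r; [apply pow_le; nra|]. apply Rmult_le_compat_r; [lra|].
    apply pow_incr. split; [nra| lra].
Qed.
End Sard.

Lemma dpl_ext f g x l : (forall y, f y = g y) -> derivable_pt_lim f x l -> derivable_pt_lim g x l.
Proof. intros H. replace g with f; auto. apply functional_extensionality; auto. Qed.

Lemma dpl_eq f x l l' : l = l' -> derivable_pt_lim f x l -> derivable_pt_lim f x l'.
Proof. intros ->; auto. Qed.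

Lemma dpl_sq f x l : derivable_pt_lim f x l -> derivable_pt_lim (fun y => (f y) ^ 2) x (2 * f x * l).
Proof.
  intros H. apply (dpl_ext (mult_fct f f)); [intros; unfold mult_fct; ring|].
  apply (dpl_eq _ _ (l * f x + f x * l)); [ring|]. apply derivable_pt_lim_mult; auto.
Qed.

Lemma dpl_minus_const f c x l : derivable_pt_lim f x l -> derivable_pt_lim (fun y => f y - c) x l.
Proof.
  intros H. apply (dpl_ext (minus_fct f (fct_cte c))); [intros; unfold minus_fct, fct_cte; ring|].
  apply (dpl_eq _ _ (l - 0)); [ring|]. apply derivable_pt_lim_minus; auto. apply derivable_pt_lim_const.
Qed.

Lemma dpl_const_minus f c x l : derivable_pt_lim f x l -> derivable_pt_lim (fun y => c - f y) x (- l).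
Proof.
  intros H. apply (dpl_ext (minus_fct (fct_cte c) f)); [intros; unfold minus_fct, fct_cte; ring|].
  apply (dpl_eq _ _ (0 - l)); [ring|]. apply derivable_pt_lim_minus; auto. apply derivable_pt_lim_const.
Qed.

Lemma dpl_plus2 f g x l l' : derivable_pt_lim f x l -> derivable_pt_lim g x l' ->
  derivable_pt_lim (fun y => f y + g y) x (l + l').
Proof.
  intros H H'. apply (dpl_ext (plus_fct f g)); [intros; unfold plus_fct; ring|].
  apply derivable_pt_lim_plus; auto.
Qed.

Lemma mvt_bound (f f' : R -> R) a b K e :
  (forall c, Rmin a b <= c <= Rmax a b -> derivable_pt_lim f c (f' c)) ->
  (forall c, Rmin a b <= c <= Rmax a b -> Rabs (f' c - K) <= e) ->
  Rabs (f b - f a - K * (b - a)) <= e * Rabs (b - a).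
Proof.
  intros Hd Hb.
  destruct (Rtotal_order a b) as [Hab|[Hab|Hab]].
  - rewrite Rmin_left, Rmax_right in * by lra.
    destruct (MVT_cor2 f f' a b Hab Hd) as (c & Hc & Hc2). rewrite Hc.
    replace (f' c * (b - a) - K * (b - a)) with ((f' c - K) * (b - a)) by ring.
    rewrite Rabs_mult. apply Rmult_le_compat_r; [apply Rabs_pos| apply Hb; lra].
  - subst. replace (f b - f b - K * (b - b)) with 0 by ring. rewrite Rminus_diag, !Rabs_R0. lra.
  - rewrite Rmin_right, Rmax_left in * by lra.
    destruct (MVT_cor2 f f' b a Hab Hd) as (c & Hc & Hc2).
    replace (f b - f a - K * (b - a)) with (- ((f a - f b) - K * (a - b))) by ring.
    rewrite Hc, Rabs_Ropp.
    replace (f' c * (a - b) - K * (a - b)) with ((f' c - K) * (a - b)) by ring.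
    rewrite Rabs_mult, (Rabs_minus_sym b a). apply Rmult_le_compat_r; [apply Rabs_pos| apply Hb; lra].
Qed.

Section Curve.
Variables (gx gy gx' gy' : R -> R).
Hypothesis Hdx : forall t, derivable_pt_lim gx t (gx' t).
Hypothesis Hdy : forall t, derivable_pt_lim gy t (gy' t).
Hypothesis Hcx : continuity gx'.
Hypothesis Hcy : continuity gy'.
Variables (A B : R).
Hypothesis HAB : A <= B.

Definition inI t := A <= t <= B.

Definition UC (f : R -> R) := forall e, 0 < e -> exists d, 0 < d /\
  forall a a0, inI a -> inI a0 -> Rabs (a - a0) <= d -> Rabs (f a - f a0) <= e.
Definition BD (f : R -> R) M := 0 <= M /\ forall a, inI a -> Rabs (f a) <= M.

Lemma cont_UC f : (forall t, continuity_pt f t) -> UC f.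
Proof.
  intros Hc e He.
  destruct (Heine f (fun c => A <= c <= B) (compact_P3 A B) (fun x _ => Hc x) (mkposreal e He)) as [d Hd].
  exists (d / 2). split; [destruct d; simpl; lra|].
  intros a a0 Ha Ha0 Haa. apply Rlt_le. apply (Hd a a0 Ha Ha0). destruct d; simpl in *; lra.
Qed.

Lemma cont_BD f : (forall t, continuity_pt f t) -> exists M, BD f M.
Proof.
  intros Hc.
  destruct (continuity_ab_maj f A B HAB (fun c _ => Hc c)) as (M1 & HM1 & _).
  destruct (continuity_ab_maj (fun t => - f t) A B HAB) as (M2 & HM2 & _).
  { intros c _. apply continuity_pt_opp. apply Hc. }
  exists (Rabs (f M1) + Rabs (f M2)). split; [pose proof (Rabs_pos (f M1)); pose proof (Rabs_pos (f M2)); lra|].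
  intros a Ha. specialize (HM1 a Ha). specialize (HM2 a Ha).
  apply Rabs_le. pose proof (Rabs_pos (f M1)); pose proof (Rabs_pos (f M2)).
  pose proof (Rle_abs (f M1)). pose proof (Rle_abs (- f M2)). rewrite Rabs_Ropp in H2. lra.
Qed.

Lemma gx_cont t : continuity_pt gx t.
Proof. apply derivable_continuous_pt. exists (gx' t). apply Hdx. Qed.
Lemma gy_cont t : continuity_pt gy t.
Proof. apply derivable_continuous_pt. exists (gy' t). apply Hdy. Qed.

Lemma prod_uc f h Mf Mh : UC f -> BD f Mf -> UC h -> BD h Mh ->
  forall e, 0 < e -> exists d, 0 < d /\ forall a b c a0 b0 c0,
    inI a -> inI b -> inI c -> inI a0 -> inI b0 -> inI c0 ->
    Rabs (a - a0) <= d -> Rabs (b - b0) <= d -> Rabs (c - c0) <= d ->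
    Rabs ((f a - f b) * h c - (f a0 - f b0) * h c0) <= e.
Proof.
  intros Uf [HMf Bf] Uh [HMh Bh] e He.
  set (e1 := e / (2 * Mh + 2 * Mf + 1)).
  assert (He1 : 0 < e1) by (unfold e1; apply Rdiv_lt_0_compat; lra).
  destruct (Uf e1 He1) as (d1 & Hd1 & Hf). destruct (Uh e1 He1) as (d2 & Hd2 & Hh).
  exists (Rmin d1 d2). split; [apply Rmin_pos; auto|].
  intros a b c a0 b0 c0 Ha Hb Hc Ha0 Hb0 Hc0 Haa Hbb Hcc.
  pose proof (Rmin_l d1 d2); pose proof (Rmin_r d1 d2).
  assert (X1 : Rabs ((f a - f b) - (f a0 - f b0)) <= 2 * e1).
  { replace ((f a - f b) - (f a0 - f b0)) with ((f a - f a0) - (f b - f b0)) by ring.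
    eapply Rle_trans; [apply Rabs_triang|]. rewrite Rabs_Ropp.
    assert (Rabs (f a - f a0) <= e1) by (apply Hf; auto; lra).
    assert (Rabs (f b - f b0) <= e1) by (apply Hf; auto; lra). lra. }
  assert (X2 : Rabs (h c - h c0) <= e1) by (apply Hh; auto; lra).
  assert (X3 : Rabs (h c) <= Mh) by auto.
  assert (X4 : Rabs (f a0 - f b0) <= 2 * Mf).
  { eapply Rle_trans; [apply Rabs_triang|]. rewrite Rabs_Ropp. pose proof (Bf a0 Ha0); pose proof (Bf b0 Hb0); lra. }
  replace ((f a - f b) * h c - (f a0 - f b0) * h c0) with
    (((f a - f b) - (f a0 - f b0)) * h c + (f a0 - f b0) * (h c - h c0)) by ring.
  eapply Rle_trans; [apply Rabs_triang|]. rewrite !Rabs_mult.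
  apply Rle_trans with (2 * e1 * Mh + 2 * Mf * e1).
  - apply Rplus_le_compat; apply Rmult_le_compat; auto using Rabs_pos.
  - unfold e1. apply Rle_trans with (e / (2 * Mh + 2 * Mf + 1) * (2 * Mh + 2 * Mf + 1)).
    + assert (0 <= e / (2 * Mh + 2 * Mf + 1)) by (apply Rlt_le, Rdiv_lt_0_compat; lra). nra.
    + right. field. lra.
Qed.

Definition Qf t s := (gx t - gx s) ^ 2 + (gy t - gy s) ^ 2.
Definition P1 t s := 2 * (gx t - gx s) * gx' t + 2 * (gy t - gy s) * gy' t.
Definition P2 t s := 2 * (gx t - gx s) * (- gx' s) + 2 * (gy t - gy s) * (- gy' s).

Lemma Qf_d1 s t : derivable_pt_lim (fun y => Qf y s) t (P1 t s).
Proof.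
  unfold Qf, P1.
  apply (dpl_plus2 (fun y => (gx y - gx s) ^ 2) (fun y => (gy y - gy s) ^ 2)).
  - apply (dpl_sq (fun y => gx y - gx s)). apply dpl_minus_const; auto.
  - apply (dpl_sq (fun y => gy y - gy s)). apply dpl_minus_const; auto.
Qed.
Lemma Qf_d2 t s : derivable_pt_lim (fun y => Qf t y) s (P2 t s).
Proof.
  unfold Qf, P2.
  apply (dpl_plus2 (fun y => (gx t - gx y) ^ 2) (fun y => (gy t - gy y) ^ 2)).
  - apply (dpl_sq (fun y => gx t - gx y)). apply dpl_const_minus; auto.
  - apply (dpl_sq (fun y => gy t - gy y)). apply dpl_const_minus; auto.
Qed.

Lemma inI_between a b c : inI a -> inI b -> Rmin a b <= c <= Rmax a b -> inI c.
Proof. unfold inI; intros. unfold Rmin, Rmax in *; repeat destruct Rle_dec; lra. Qed.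

Lemma between_close a b c a0 d : Rabs (a - a0) <= d -> Rabs (b - a0) <= d ->
  Rmin a b <= c <= Rmax a b -> Rabs (c - a0) <= d.
Proof.
  intros H1 H2 H3. apply Rabs_le_between in H1. apply Rabs_le_between in H2. apply Rabs_le.
  unfold Rmin, Rmax in *; repeat destruct Rle_dec; lra.
Qed.

Lemma curve_bounds : exists MX MY MX' MY', BD gx MX /\ BD gy MY /\ BD gx' MX' /\ BD gy' MY'.
Proof.
  destruct (cont_BD gx gx_cont) as [MX HX]. destruct (cont_BD gy gy_cont) as [MY HY].
  destruct (cont_BD gx' Hcx) as [MX' HX']. destruct (cont_BD gy' Hcy) as [MY' HY'].
  exists MX, MY, MX', MY'; auto.
Qed.

Lemma P_uc : forall e, 0 < e -> exists d, 0 < d /\ forall a b a0 b0,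
  inI a -> inI b -> inI a0 -> inI b0 -> Rabs (a - a0) <= d -> Rabs (b - b0) <= d ->
  Rabs (P1 a b - P1 a0 b0) <= e /\ Rabs (P2 a b - P2 a0 b0) <= e.
Proof.
  intros e He.
  destruct curve_bounds as (MX & MY & MX' & MY' & BX & BY & BX' & BY').
  assert (UX := cont_UC gx gx_cont). assert (UY := cont_UC gy gy_cont).
  assert (UX' := cont_UC gx' Hcx). assert (UY' := cont_UC gy' Hcy).
  assert (He4 : 0 < e / 4) by lra.
  destruct (prod_uc gx gx' MX MX' UX BX UX' BX' _ He4) as (d1 & Hd1 & H1).
  destruct (prod_uc gy gy' MY MY' UY BY UY' BY' _ He4) as (d2 & Hd2 & H2).
  exists (Rmin d1 d2). split; [apply Rmin_pos; auto|].
  intros a b a0 b0 Ha Hb Ha0 Hb0 Haa Hbb.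
  pose proof (Rmin_l d1 d2); pose proof (Rmin_r d1 d2). split.
  - unfold P1.
    assert (Y1 := H1 a b a a0 b0 a0 Ha Hb Ha Ha0 Hb0 Ha0 ltac:(lra) ltac:(lra) ltac:(lra)).
    assert (Y2 := H2 a b a a0 b0 a0 Ha Hb Ha Ha0 Hb0 Ha0 ltac:(lra) ltac:(lra) ltac:(lra)).
    replace (2 * (gx a - gx b) * gx' a + 2 * (gy a - gy b) * gy' a -
      (2 * (gx a0 - gx b0) * gx' a0 + 2 * (gy a0 - gy b0) * gy' a0)) with
      (2 * ((gx a - gx b) * gx' a - (gx a0 - gx b0) * gx' a0) + 2 * ((gy a - gy b) * gy' a - (gy a0 - gy b0) * gy' a0)) by ring.
    eapply Rle_trans; [apply Rabs_triang|]. rewrite !Rabs_mult, Rabs_right by lra. lra.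
  - unfold P2.
    assert (Y1 := H1 a b b a0 b0 b0 Ha Hb Hb Ha0 Hb0 Hb0 ltac:(lra) ltac:(lra) ltac:(lra)).
    assert (Y2 := H2 a b b a0 b0 b0 Ha Hb Hb Ha0 Hb0 Hb0 ltac:(lra) ltac:(lra) ltac:(lra)).
    replace (2 * (gx a - gx b) * - gx' b + 2 * (gy a - gy b) * - gy' b -
      (2 * (gx a0 - gx b0) * - gx' b0 + 2 * (gy a0 - gy b0) * - gy' b0)) with
      (-2 * ((gx a - gx b) * gx' b - (gx a0 - gx b0) * gx' b0) + -2 * ((gy a - gy b) * gy' b - (gy a0 - gy b0) * gy' b0)) by ring.
    eapply Rle_trans; [apply Rabs_triang|]. rewrite !Rabs_mult.
    replace (Rabs (-2)) with 2 by (rewrite Rabs_left; lra). lra.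
Qed.

Lemma Qf_unif_diff : forall e, 0 < e -> exists d, 0 < d /\ forall t0 s0 t t' s s',
  inI t0 -> inI s0 -> inI t -> inI t' -> inI s -> inI s' ->
  Rabs (t - t0) <= d -> Rabs (t' - t0) <= d -> Rabs (s - s0) <= d -> Rabs (s' - s0) <= d ->
  Rabs (Qf t s - Qf t' s' - P1 t0 s0 * (t - t') - P2 t0 s0 * (s - s')) <= e * (Rabs (t - t') + Rabs (s - s')).
Proof.
  intros e He. destruct (P_uc e He) as (d & Hd & HP).
  exists d. split; auto.
  intros t0 s0 t t' s s' Ht0 Hs0 Ht Ht' Hs Hs' H1 H2 H3 H4.
  assert (M1 : Rabs (Qf t s - Qf t' s - P1 t0 s0 * (t - t')) <= e * Rabs (t - t')).
  { apply (mvt_bound (fun y => Qf y s) (fun y => P1 y s) t' t).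
    - intros c _. apply Qf_d1.
    - intros c Hc. exact (proj1 (HP c s t0 s0 (inI_between t' t c Ht' Ht Hc) Hs Ht0 Hs0 (between_close t' t c t0 d H2 H1 Hc) H3)). }
  assert (M2 : Rabs (Qf t' s - Qf t' s' - P2 t0 s0 * (s - s')) <= e * Rabs (s - s')).
  { apply (mvt_bound (fun y => Qf t' y) (fun y => P2 t' y) s' s).
    - intros c _. apply Qf_d2.
    - intros c Hc. exact (proj2 (HP t' c t0 s0 Ht' (inI_between s' s c Hs' Hs Hc) Ht0 Hs0 H2 (between_close s' s c s0 d H4 H3 Hc))). }
  replace (Qf t s - Qf t' s' - P1 t0 s0 * (t - t') - P2 t0 s0 * (s - s')) with
    ((Qf t s - Qf t' s - P1 t0 s0 * (t - t')) + (Qf t' s - Qf t' s' - P2 t0 s0 * (s - s'))) by ring.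
  eapply Rle_trans; [apply Rabs_triang|]. lra.
Qed.

Lemma Qf_lip : exists LQ MQ, 0 <= LQ /\ 0 <= MQ /\
  (forall t s t' s', inI t -> inI s -> inI t' -> inI s' ->
    Rabs (Qf t s - Qf t' s') <= LQ * (Rabs (t - t') + Rabs (s - s'))) /\
  (forall t s, inI t -> inI s -> Rabs (Qf t s) <= MQ).
Proof.
  destruct curve_bounds as (MX & MY & MX' & MY' & [HX BX] & [HY BY] & [HX' BX'] & [HY' BY']).
  set (MP := 4 * MX * MX' + 4 * MY * MY').
  assert (HP : forall a b, inI a -> inI b -> Rabs (P1 a b) <= MP /\ Rabs (P2 a b) <= MP).
  { intros a b Ha Hb.
    assert (Rabs (gx a - gx b) <= 2 * MX).
    { eapply Rle_trans; [apply Rabs_triang|]. rewrite Rabs_Ropp. pose proof (BX a Ha); pose proof (BX b Hb); lra. }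
    assert (Rabs (gy a - gy b) <= 2 * MY).
    { eapply Rle_trans; [apply Rabs_triang|]. rewrite Rabs_Ropp. pose proof (BY a Ha); pose proof (BY b Hb); lra. }
    unfold P1, P2, MP. split; (eapply Rle_trans; [apply Rabs_triang|]); rewrite !Rabs_mult;
      try rewrite !Rabs_Ropp; rewrite (Rabs_right 2) by lra.
    - pose proof (BX' a Ha); pose proof (BY' a Ha).
      assert (Rabs (gx a - gx b) * Rabs (gx' a) <= 2 * MX * MX') by (apply Rmult_le_compat; auto using Rabs_pos).
      assert (Rabs (gy a - gy b) * Rabs (gy' a) <= 2 * MY * MY') by (apply Rmult_le_compat; auto using Rabs_pos).
      lra.
    - pose proof (BX' b Hb); pose proof (BY' b Hb).
      assert (Rabs (gx a - gx b) * Rabs (gx' b) <= 2 * MX * MX') by (apply Rmult_le_compat; auto using Rabs_pos).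
      assert (Rabs (gy a - gy b) * Rabs (gy' b) <= 2 * MY * MY') by (apply Rmult_le_compat; auto using Rabs_pos).
      lra. }
  assert (HMP : 0 <= MP) by (unfold MP; nra).
  exists MP, ((2 * MX) ^ 2 + (2 * MY) ^ 2). split; [auto| split; [nra| split]].
  - intros t s t' s' Ht Hs Ht' Hs'.
    assert (M1 : Rabs (Qf t s - Qf t' s - 0 * (t - t')) <= MP * Rabs (t - t')).
    { apply (mvt_bound (fun y => Qf y s) (fun y => P1 y s) t' t).
      - intros c _. apply Qf_d1.
      - intros c Hc. rewrite Rminus_0_r. apply HP; auto. apply (inI_between t' t); auto. }
    assert (M2 : Rabs (Qf t' s - Qf t' s' - 0 * (s - s')) <= MP * Rabs (s - s')).
    { apply (mvt_bound (fun y => Qf t' y) (fun y => P2 t' y) s' s).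
      - intros c _. apply Qf_d2.
      - intros c Hc. rewrite Rminus_0_r. apply HP; auto. apply (inI_between s' s); auto. }
    rewrite Rmult_0_l, Rminus_0_r in M1, M2.
    replace (Qf t s - Qf t' s') with ((Qf t s - Qf t' s) + (Qf t' s - Qf t' s')) by ring.
    eapply Rle_trans; [apply Rabs_triang|]. lra.
  - intros t s Ht Hs. unfold Qf.
    assert (Rabs (gx t - gx s) <= 2 * MX).
    { eapply Rle_trans; [apply Rabs_triang|]. rewrite Rabs_Ropp. pose proof (BX t Ht); pose proof (BX s Hs); lra. }
    assert (Rabs (gy t - gy s) <= 2 * MY).
    { eapply Rle_trans; [apply Rabs_triang|]. rewrite Rabs_Ropp. pose proof (BY t Ht); pose proof (BY s Hs); lra. }
    rewrite Rabs_right by (apply Rle_ge, Rplus_le_le_0_compat; apply pow2_ge_0).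
    assert ((gx t - gx s) ^ 2 <= (2 * MX) ^ 2).
    { rewrite <- (pow2_abs (gx t - gx s)). apply pow_incr. split; auto using Rabs_pos. }
    assert ((gy t - gy s) ^ 2 <= (2 * MY) ^ 2).
    { rewrite <- (pow2_abs (gy t - gy s)). apply pow_incr. split; auto using Rabs_pos. }
    lra.
Qed.
End Curve.

Definition sx (n : nat) (x : nat -> R) (k : nat) : R :=
  if Nat.eqb k 0 then 0 else if Nat.eqb k n then 2 * PI else x (k - 1)%nat.
Definition dsx (n : nat) (v : nat -> R) (k : nat) : R :=
  if Nat.eqb k 0 then 0 else if Nat.eqb k n then 0 else v (k - 1)%nat.
Definition Gt gx gy (n : nat) (x : nat -> R) (i : nat) : R :=
  x (n - 1)%nat * Qf gx gy (sx n x (S i)) (sx n x i).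

Lemma PI_bounds : 0 < 2 * PI <= 8.
Proof. pose proof PI_RGT_0; pose proof PI_4; lra. Qed.

Lemma sx_in n Sz x k : near1 n Sz x -> 8 <= Sz -> (k <= n)%nat -> -1 <= sx n x k <= Sz + 1.
Proof.
  intros Hx HS Hk. pose proof PI_bounds. unfold sx.
  destruct (Nat.eqb_spec k 0); [lra|]. destruct (Nat.eqb_spec k n); [lra|]. apply Hx; lia.
Qed.

Lemma sx_close n x y r k : close n x y r -> 0 <= r -> (k <= n)%nat -> Rabs (sx n x k - sx n y k) <= r.
Proof.
  intros Hc Hr Hk. unfold sx.
  destruct (Nat.eqb_spec k 0); [rewrite Rminus_diag, Rabs_R0; lra|].
  destruct (Nat.eqb_spec k n); [rewrite Rminus_diag, Rabs_R0; lra|]. apply Hc; lia.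
Qed.

Lemma dsx_diff n x y k : dsx n (fun k => x k - y k) k = sx n x k - sx n y k.
Proof. unfold dsx, sx. destruct (Nat.eqb k 0); [ring|]. destruct (Nat.eqb k n); ring. Qed.

Lemma dsx_scal n c v k : dsx n (fun k => c * v k) k = c * dsx n v k.
Proof. unfold dsx. destruct (Nat.eqb k 0); [ring|]. destruct (Nat.eqb k n); ring. Qed.

Section Concrete.
Variables (gx gy gx' gy' : R -> R).
Hypothesis Hdx : forall t, derivable_pt_lim gx t (gx' t).
Hypothesis Hdy : forall t, derivable_pt_lim gy t (gy' t).
Hypothesis Hcx : continuity gx'.
Hypothesis Hcy : continuity gy'.
Variables (n : nat) (Sz : R).
Hypothesis Hn : (1 <= n)%nat.
Hypothesis HSz : 8 <= Sz.

Lemma close_nonneg x y r : close n x y r -> 0 <= r.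
Proof. intros H. specialize (H O ltac:(lia)). pose proof (Rabs_pos (x O - y O)). lra. Qed.

Lemma Gt_hyps : exists L, 0 <= L /\
  (forall x y r, near1 n Sz x -> near1 n Sz y -> close n x y r ->
     forall i, (i < n)%nat -> Rabs (Gt gx gy n x i - Gt gx gy n y i) <= L * r) /\
  (forall eps, 0 < eps -> exists del, 0 < del /\ del <= 1 /\
    forall p, inK n Sz p -> exists Dp : (nat -> R) -> (nat -> R),
      (forall c v i, Dp (fun k => c * v k) i = c * Dp v i) /\
      (forall y z r, close n y p del -> close n z p del -> close n y z r ->
        forall i, (i < n)%nat -> Rabs (Gt gx gy n y i - Gt gx gy n z i - Dp (fun k => y k - z k) i) <= eps * r)).
Proof.
  assert (HAB : -1 <= Sz + 1) by lra.
  destruct (Qf_lip gx gy gx' gy' Hdx Hdy Hcx Hcy (-1) (Sz + 1) HAB) as (LQ & MQ & HLQ & HMQ & Hlip & Hbd).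
  assert (Hin : forall x k, near1 n Sz x -> (k <= n)%nat -> inI (-1) (Sz + 1) (sx n x k)).
  { intros x k Hx Hk. apply sx_in; auto. }
  assert (Hmu : forall x, near1 n Sz x -> Rabs (x (n - 1)%nat) <= Sz + 1).
  { intros x Hx. specialize (Hx (n - 1)%nat ltac:(lia)). apply Rabs_le; lra. }
  exists (MQ + 2 * (Sz + 1) * LQ). split; [nra| split].
  - intros x y r Hx Hy Hxy i Hi. unfold Gt.
    pose proof (close_nonneg _ _ _ Hxy) as Hr.
    set (Qx := Qf gx gy (sx n x (S i)) (sx n x i)). set (Qy := Qf gx gy (sx n y (S i)) (sx n y i)).
    assert (H1 : Rabs Qx <= MQ) by (apply Hbd; apply Hin; auto; lia).
    assert (H2 : Rabs (Qx - Qy) <= LQ * (r + r)).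
    { eapply Rle_trans; [apply Hlip; apply Hin; auto; lia|]. apply Rmult_le_compat_l; auto.
      apply Rplus_le_compat; apply sx_close; auto; lia. }
    assert (H3 : Rabs (x (n - 1)%nat - y (n - 1)%nat) <= r) by (apply Hxy; lia).
    pose proof (Hmu y Hy).
    replace (x (n - 1)%nat * Qx - y (n - 1)%nat * Qy) with ((x (n - 1)%nat - y (n - 1)%nat) * Qx + y (n - 1)%nat * (Qx - Qy)) by ring.
    eapply Rle_trans; [apply Rabs_triang|]. rewrite !Rabs_mult.
    apply Rle_trans with (r * MQ + (Sz + 1) * (LQ * (r + r))).
    + apply Rplus_le_compat; apply Rmult_le_compat; auto using Rabs_pos.
    + lra.
  - intros eps Heps.
    set (eQ := eps / (4 * Sz + 1)).
    assert (HeQ : 0 < eQ) by (unfold eQ; apply Rdiv_lt_0_compat; lra).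
    destruct (Qf_unif_diff gx gy gx' gy' Hdx Hdy Hcx Hcy (-1) (Sz + 1) HAB eQ HeQ) as (dQ & HdQ & HQd).
    set (del := Rmin 1 (Rmin dQ (eps / (8 * LQ + 1)))).
    assert (Hdel0 : 0 < del) by (unfold del; repeat apply Rmin_pos; try lra; apply Rdiv_lt_0_compat; lra).
    assert (Hdel1 : del <= 1) by apply Rmin_l.
    assert (Hdel2 : del <= dQ) by (unfold del; eapply Rle_trans; [apply Rmin_r| apply Rmin_l]).
    assert (Hdel3 : del <= eps / (8 * LQ + 1)) by (unfold del; eapply Rle_trans; [apply Rmin_r| apply Rmin_r]).
    exists del. split; [auto| split; [auto|]].
    intros p Hp.
    set (sp := sx n p).
    exists (fun v i => v (n - 1)%nat * Qf gx gy (sp (S i)) (sp i) +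
       p (n - 1)%nat * (P1 gx gy gx' gy' (sp (S i)) (sp i) * dsx n v (S i) + P2 gx gy gx' gy' (sp (S i)) (sp i) * dsx n v i)).
    split.
    + intros c v i. rewrite !dsx_scal. ring.
    + intros y z r Hy Hz Hyz i Hi.
      rewrite !dsx_diff.
      pose proof (close_nonneg _ _ _ Hyz) as Hr.
      assert (HpK : near1 n Sz p) by (intros k Hk; specialize (Hp k Hk); lra).
      assert (Hyn : near1 n Sz y) by (apply (near1_of_close n Sz p y del); auto).
      assert (Hzn : near1 n Sz z) by (apply (near1_of_close n Sz p z del); auto).
      unfold Gt.
      set (ty := sx n y (S i)). set (sy := sx n y i). set (tz := sx n z (S i)). set (sz := sx n z i).
      set (t0 := sp (S i)). set (s0 := sp i).
      assert (Ity : inI (-1) (Sz + 1) ty) by (apply Hin; auto; lia).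
      assert (Isy : inI (-1) (Sz + 1) sy) by (apply Hin; auto; lia).
      assert (Itz : inI (-1) (Sz + 1) tz) by (apply Hin; auto; lia).
      assert (Isz : inI (-1) (Sz + 1) sz) by (apply Hin; auto; lia).
      assert (It0 : inI (-1) (Sz + 1) t0) by (apply Hin; auto; lia).
      assert (Is0 : inI (-1) (Sz + 1) s0) by (apply Hin; auto; lia).
      assert (Dty : Rabs (ty - t0) <= del) by (apply sx_close; [auto| lra| lia]).
      assert (Dsy : Rabs (sy - s0) <= del) by (apply sx_close; [auto| lra| lia]).
      assert (Dtz : Rabs (tz - t0) <= del) by (apply sx_close; [auto| lra| lia]).
      assert (Dsz : Rabs (sz - s0) <= del) by (apply sx_close; [auto| lra| lia]).
      assert (Dt : Rabs (ty - tz) <= r) by (apply sx_close; [auto| lra| lia]).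
      assert (Ds : Rabs (sy - sz) <= r) by (apply sx_close; [auto| lra| lia]).
      set (Qy := Qf gx gy ty sy). set (Qz := Qf gx gy tz sz). set (Q0 := Qf gx gy t0 s0).
      assert (E1 : Rabs (Qz - Q0) <= LQ * (del + del)).
      { eapply Rle_trans; [apply Hlip; auto|]. apply Rmult_le_compat_l; lra. }
      assert (E2 : Rabs (Qy - Qz) <= LQ * (r + r)).
      { eapply Rle_trans; [apply Hlip; auto|]. apply Rmult_le_compat_l; lra. }
      assert (E3 : Rabs (Qy - Qz - P1 gx gy gx' gy' t0 s0 * (ty - tz) - P2 gx gy gx' gy' t0 s0 * (sy - sz)) <= eQ * (r + r)).
      { eapply Rle_trans; [apply HQd; auto; lra|]. apply Rmult_le_compat_l; lra. }
      assert (M1 : Rabs (y (n - 1)%nat - z (n - 1)%nat) <= r) by (apply Hyz; lia).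
      assert (M2 : Rabs (y (n - 1)%nat - p (n - 1)%nat) <= del) by (apply Hy; lia).
      assert (M3 : Rabs (p (n - 1)%nat) <= Sz) by (specialize (Hp (n - 1)%nat ltac:(lia)); apply Rabs_le; lra).
      replace (y (n - 1)%nat * Qy - z (n - 1)%nat * Qz -
        ((y (n - 1)%nat - z (n - 1)%nat) * Q0 +
         p (n - 1)%nat * (P1 gx gy gx' gy' t0 s0 * (ty - tz) + P2 gx gy gx' gy' t0 s0 * (sy - sz))))
      with ((y (n - 1)%nat - z (n - 1)%nat) * (Qz - Q0) + (y (n - 1)%nat - p (n - 1)%nat) * (Qy - Qz) +
        p (n - 1)%nat * (Qy - Qz - P1 gx gy gx' gy' t0 s0 * (ty - tz) - P2 gx gy gx' gy' t0 s0 * (sy - sz))) by ring.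
      eapply Rle_trans; [apply Rabs_triang|]. eapply Rle_trans; [apply Rplus_le_compat_r, Rabs_triang|].
      rewrite !Rabs_mult.
      apply Rle_trans with (r * (LQ * (del + del)) + del * (LQ * (r + r)) + Sz * (eQ * (r + r))).
      * repeat apply Rplus_le_compat; apply Rmult_le_compat; auto using Rabs_pos.
      * assert (A1 : LQ * del <= eps / 8).
        { apply Rle_trans with (LQ * (eps / (8 * LQ + 1))); [apply Rmult_le_compat_l; auto|].
          apply Rmult_le_reg_r with (8 * LQ + 1); [lra|].
          replace (LQ * (eps / (8 * LQ + 1)) * (8 * LQ + 1)) with (LQ * eps) by (field; lra). nra. }
        assert (A2 : Sz * eQ <= eps / 4).
        { unfold eQ. apply Rmult_le_reg_r with (4 * Sz + 1); [lra|].
          replace (Sz * (eps / (4 * Sz + 1)) * (4 * Sz + 1)) with (Sz * eps) by (field; lra). nra. }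
        nra.
Qed.
End Concrete.

Lemma cont_at f x0 : continuity_pt f x0 -> forall eps, 0 < eps -> exists d, 0 < d /\
  forall x, Rabs (x - x0) < d -> Rabs (f x - f x0) < eps.
Proof.
  intros H eps He. destruct (H eps He) as [d [Hd Hx]]. exists d; split; auto.
  intros x Hxd. destruct (Req_dec x x0) as [->|Hne].
  - rewrite Rminus_diag, Rabs_R0; lra.
  - apply (Hx x). split; [split; [constructor| auto]| exact Hxd].
Qed.

Lemma gdist_tri gx gy s t u : gdist gx gy s u <= gdist gx gy s t + gdist gx gy t u.
Proof.
  assert (E : forall a b, gdist gx gy a b = dist_euc (gx a) (gy a) (gx b) (gy b)).
  { intros a b. unfold gdist, dist_euc, Rsqr. f_equal. ring. }
  rewrite !E. apply triangle.
Qed.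

Lemma gdist_nonneg gx gy s t : 0 <= gdist gx gy s t.
Proof. apply sqrt_pos. Qed.

Lemma gdist_sym gx gy s t : gdist gx gy s t = gdist gx gy t s.
Proof. unfold gdist. f_equal. ring. Qed.

Lemma sum_first_le n f g : (forall i, (i < n)%nat -> f i <= g i) -> sum_first n f <= sum_first n g.
Proof. induction n; intros H; simpl; [lra|]. assert (sum_first n f <= sum_first n g) by (apply IHn; intros; apply H; lia). specialize (H n ltac:(lia)). lra. Qed.

Lemma sum_first_tele n g : sum_first n (fun i => g (S i) - g i) = g n - g O.
Proof. induction n; simpl; [ring| rewrite IHn; ring]. Qed.

Lemma sum_first_scal n c f : sum_first n (fun i => c * f i) = c * sum_first n f.
Proof. induction n; simpl; [ring| rewrite IHn; ring]. Qed.

Lemma sum_first_mono_n n m f : (forall i, (i < n)%nat -> 0 <= f i) -> (m <= n)%nat -> sum_first m f <= sum_first n f.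
Proof. intros H Hmn; induction Hmn; [lra|]. simpl. assert (0 <= f m0) by (apply H; lia). assert (sum_first m f <= sum_first m0 f) by (apply IHHmn; intros; apply H; lia). lra. Qed.

Definition msum n f w := sum_first n (fun i => if Nat.eqb i w then 0 else f i).

Lemma sum_split_w n f w : (w < n)%nat -> sum_first n f = f w + msum n f w.
Proof.
  unfold msum. induction n; intros Hw; [lia|]. simpl.
  destruct (Nat.eq_dec w n).
  - subst. rewrite Nat.eqb_refl.
    assert (E : sum_first n (fun i => if Nat.eqb i n then 0 else f i) = sum_first n f).
    { clear IHn. assert (forall m, (m <= n)%nat -> sum_first m (fun i => if Nat.eqb i n then 0 else f i) = sum_first m f).
      { induction m; intros Hm; simpl; [auto|]. rewrite IHm by lia. destruct (Nat.eqb_spec m n); [lia| auto]. }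
      apply H; lia. }
    rewrite E. ring.
  - rewrite IHn by lia. destruct (Nat.eqb_spec n w); [lia|]. ring.
Qed.

Lemma msum_le n f g w : (forall i, (i < n)%nat -> i <> w -> f i <= g i) -> msum n f w <= msum n g w.
Proof.
  intros H. unfold msum. apply sum_first_le. intros i Hi. destruct (Nat.eqb_spec i w); [lra| auto].
Qed.

Lemma margin_exists n (P : nat -> R) : (forall w, (w < n)%nat -> 0 < P w) ->
  exists k, 0 < k /\ forall w, (w < n)%nat -> k <= P w.
Proof.
  induction n; intros H.
  - exists 1. split; [lra| intros; lia].
  - destruct IHn as (k & Hk & Hk2); [intros; apply H; lia|].
    exists (Rmin k (P n)). split; [apply Rmin_pos; auto; apply H; lia|].
    intros w Hw. destruct (Nat.eq_dec w n); [subst; apply Rmin_r|].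
    eapply Rle_trans; [apply Rmin_l| apply Hk2; lia].
Qed.

Lemma first_switch (P : nat -> Prop) N : ~ P O -> P N -> exists w, (w < N)%nat /\ ~ P w /\ P (S w).
Proof.
  induction N; intros H0 HN; [contradiction|].
  destruct (classic (P N)).
  - destruct (IHN H0 H) as (w & Hw & H1 & H2). exists w; split; [lia| auto].
  - exists N; split; [lia| auto].
Qed.

Lemma sq_pos x : x <> 0 -> 0 < x ^ 2.
Proof. intros H. apply Rsqr_pos_lt in H. unfold Rsqr in H. simpl. lra. Qed.

Lemma sqrt_le_of_sq Q y : 0 <= y -> Q <= y ^ 2 -> sqrt Q <= y.
Proof. intros Hy HQ. rewrite <- (sqrt_pow2 y Hy). apply sqrt_le_1_alt. exact HQ. Qed.

Theorem collapse gx gy gx' gy' n a : C1_jordan_param gx gy gx' gy' -> (1 <= n)%nat -> in_W n a ->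
  exists Lam, 0 < Lam /\ forall sigma lam, neat_config gx gy n a sigma lam -> Lam <= lam.
Proof.
  intros (Hdx & Hdy & Hcx & Hcy & Hnz & Hper & Hinj) Hn [Hapos Hatri].
  set (Sig := sum_first n a).
  assert (HSig : 0 < Sig).
  { unfold Sig. destruct n; [lia|]. simpl. pose proof (Hapos n ltac:(lia)).
    assert (0 <= sum_first n a).
    { clear -Hapos. assert (forall m, (m <= S n)%nat -> 0 <= sum_first m a).
      { induction m; intros; simpl; [lra|]. pose proof (Hapos m ltac:(lia)). pose proof (IHm ltac:(lia)). lra. }
      apply H; lia. }
    lra. }
  set (ex := gx' 0). set (ey := gy' 0).
  set (al2 := ex ^ 2 + ey ^ 2).
  assert (Hal2 : 0 < al2).
  { unfold al2, ex, ey. destruct (Hnz 0) as [H|H].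
    - assert (0 < gx' 0 ^ 2) by (apply sq_pos; auto); pose proof (pow2_ge_0 (gy' 0)); nra.
    - pose proof (pow2_ge_0 (gx' 0)). assert (0 < gy' 0 ^ 2) by nra. lra. }
  set (al := sqrt al2).
  assert (Hal : 0 < al) by (apply sqrt_lt_R0; auto).
  assert (Halal : al * al = al2) by (apply sqrt_sqrt; lra).
  destruct (margin_exists n (fun w => (Sig - 2 * a w) / a w)) as (kap & Hkap & Hkap2).
  { intros w Hw. apply Rdiv_lt_0_compat; [| apply Hapos; auto]. specialize (Hatri w Hw). unfold Sig. lra. }
  assert (Hmarg : forall w, (w < n)%nat -> (1 + kap) * a w <= Sig - a w).
  { intros w Hw. specialize (Hkap2 w Hw). specialize (Hapos w Hw).
    apply Rmult_le_compat_r with (r := a w) in Hkap2; [|lra].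
    unfold Rdiv in Hkap2. rewrite Rmult_assoc, Rinv_l, Rmult_1_r in Hkap2 by lra. lra. }
  set (tau := Rmin (1 / 2) (kap / 8)).
  assert (Htau0 : 0 < tau) by (unfold tau; apply Rmin_pos; lra).
  assert (Htau1 : tau <= 1 / 2) by apply Rmin_l.
  assert (Htau2 : tau <= kap / 8) by apply Rmin_r.
  set (beta := Rabs ex + Rabs ey).
  assert (Hbeta : 0 <= beta) by (unfold beta; pose proof (Rabs_pos ex); pose proof (Rabs_pos ey); lra).
  set (om := Rmin 1 (tau * al2 / (beta + 1))).
  assert (Hom0 : 0 < om) by (unfold om; apply Rmin_pos; [lra| apply Rdiv_lt_0_compat; nra]).
  assert (Hom1 : om <= 1) by apply Rmin_l.
  assert (Hom2 : om * (beta + 1) <= tau * al2).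
  { assert (om <= tau * al2 / (beta + 1)) by apply Rmin_r.
    apply Rmult_le_compat_r with (r := beta + 1) in H; [|lra].
    unfold Rdiv in H. rewrite Rmult_assoc, Rinv_l, Rmult_1_r in H by lra. lra. }
  destruct (cont_at gx' 0 (Hcx 0) om Hom0) as (d1 & Hd1 & Hcx0).
  destruct (cont_at gy' 0 (Hcy 0) om Hom0) as (d2 & Hd2 & Hcy0).
  set (eta := Rmin 1 (Rmin d1 d2) / 2).
  assert (Heta0 : 0 < eta) by (unfold eta; assert (0 < Rmin 1 (Rmin d1 d2)) by (repeat apply Rmin_pos; lra); lra).
  assert (Heta1 : eta <= 1 / 2) by (unfold eta; pose proof (Rmin_l 1 (Rmin d1 d2)); lra).
  assert (Hetad : eta < d1 /\ eta < d2).
  { unfold eta. pose proof (Rmin_r 1 (Rmin d1 d2)). pose proof (Rmin_l d1 d2). pose proof (Rmin_r d1 d2).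
    assert (0 < Rmin 1 (Rmin d1 d2)) by (repeat apply Rmin_pos; lra). lra. }
  assert (HPI := PI_RGT_0). assert (HPI3 : PI > 2) by (pose proof PI2_1; lra).
  set (h := fun s => (gx s - gx 0) ^ 2 + (gy s - gy 0) ^ 2).
  destruct (continuity_ab_min h eta (2 * PI - eta)) as (smin & Hmin & Hsmin).
  { lra. }
  { intros c _. apply derivable_continuous_pt. eexists. unfold h.
    apply (dpl_plus2 (fun y => (gx y - gx 0) ^ 2) (fun y => (gy y - gy 0) ^ 2)).
    - apply (dpl_sq (fun y => gx y - gx 0)). apply dpl_minus_const; auto.
    - apply (dpl_sq (fun y => gy y - gy 0)). apply dpl_minus_const; auto. }
  set (c2 := h smin).
  assert (Hc2 : 0 < c2).
  { unfold c2, h. destruct (Req_dec (gx smin - gx 0) 0) as [E1|E1].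
    - destruct (Req_dec (gy smin - gy 0) 0) as [E2|E2].
      + exfalso. assert (smin = 0) by (apply Hinj; lra). lra.
      + pose proof (pow2_ge_0 (gx smin - gx 0)). assert (0 < (gy smin - gy 0) ^ 2) by (apply sq_pos; auto). lra.
    - pose proof (pow2_ge_0 (gy smin - gy 0)). assert (0 < (gx smin - gx 0) ^ 2) by (apply sq_pos; auto). lra. }
  exists (sqrt c2 / Sig). split; [apply Rdiv_lt_0_compat; [apply sqrt_lt_R0|]; auto|].
  intros sigma lam (Hlen & Hs0 & Hsn & Hinc & Hlam & Hside).
  apply Rnot_lt_le. intros Hsmall.
  set (s := fun k => nth k sigma 0).
  change (s O = 0) in Hs0. change (s n = 2 * PI) in Hsn.
  change (forall i, (i < n)%nat -> s i < s (S i)) in Hinc.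
  change (forall i, (i < n)%nat -> gdist gx gy (s (S i)) (s i) = lam * a i) in Hside.
  assert (Hmono : forall i j, (i <= j)%nat -> (j <= n)%nat -> s i <= s j).
  { intros i j Hij Hjn. induction Hij; [lra|]. specialize (Hinc m ltac:(lia)). specialize (IHHij ltac:(lia)). lra. }
  assert (Hsrange : forall k, (k <= n)%nat -> 0 <= s k <= 2 * PI).
  { intros k Hk. split; [rewrite <- Hs0; apply Hmono; lia| rewrite <- Hsn; apply Hmono; lia]. }
  assert (HlSig : lam * Sig < sqrt c2).
  { apply Rmult_lt_compat_r with (r := Sig) in Hsmall; auto. unfold Rdiv in Hsmall.
    rewrite Rmult_assoc, Rinv_l, Rmult_1_r in Hsmall by lra. lra. }
  assert (Hvert : forall k, (k <= n)%nat -> gdist gx gy (s k) 0 <= lam * sum_first k a).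
  { induction k; intros Hk.
    - rewrite Hs0. unfold gdist. simpl. rewrite !Rminus_diag. replace (0 * (0 * 1) + 0 * (0 * 1)) with 0 by ring. rewrite sqrt_0. lra.
    - eapply Rle_trans; [apply (gdist_tri gx gy _ (s k))|]. simpl.
      rewrite Rmult_plus_distr_l. specialize (IHk ltac:(lia)). specialize (Hside k ltac:(lia)).
      lra. }
  assert (Hfar : forall k, (k <= n)%nat -> ~ (eta <= s k <= 2 * PI - eta)).
  { intros k Hk Hin. specialize (Hmin _ Hin). specialize (Hvert k Hk).
    assert (sum_first k a <= Sig) by (apply sum_first_mono_n; auto; intros i Hi; apply Rlt_le, Hapos; auto).
    assert (sqrt c2 <= gdist gx gy (s k) 0) by (unfold gdist; apply sqrt_le_1_alt; exact Hmin).
    assert (lam * sum_first k a <= lam * Sig) by (apply Rmult_le_compat_l; lra). lra. }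
  destruct (first_switch (fun k => eta <= s k) n) as (w & Hw & Hw1 & Hw2).
  { rewrite Hs0; lra. }
  { rewrite Hsn; lra. }
  simpl in Hw1, Hw2.
  assert (Hlow : forall k, (k <= w)%nat -> 0 <= s k < eta).
  { intros k Hk. split; [apply Hsrange; lia|]. assert (s k <= s w) by (apply Hmono; lia). lra. }
  assert (Hhigh : forall k, (S w <= k)%nat -> (k <= n)%nat -> 2 * PI - eta < s k <= 2 * PI).
  { intros k Hk1 Hk2. assert (s (S w) <= s k) by (apply Hmono; lia).
    pose proof (Hfar k Hk2). pose proof (Hsrange k Hk2). split; [|lra].
    apply Rnot_le_lt. intros Hle. apply H0. lra. }
  set (t := fun k => if Nat.leb k w then s k else s k - 2 * PI).
  assert (Hper2 : forall k, gx (t k) = gx (s k) /\ gy (t k) = gy (s k)).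
  { intros k. unfold t. destruct (Nat.leb k w); [auto|].
    destruct (Hper (s k - 2 * PI)) as [E1 E2]. replace (s k - 2 * PI + 2 * PI) with (s k) in E1, E2 by ring. auto. }
  assert (Ht_small : forall k, (k <= n)%nat -> Rabs (t k) < eta).
  { intros k Hk. unfold t. destruct (Nat.leb_spec k w).
    - pose proof (Hlow k H). apply Rabs_def1; lra.
    - pose proof (Hhigh k ltac:(lia) Hk). apply Rabs_def1; lra. }
  assert (Hside2 : forall i, (i < n)%nat -> lam * a i =
     sqrt ((gx (t (S i)) - gx (t i)) ^ 2 + (gy (t (S i)) - gy (t i)) ^ 2)).
  { intros i Hi. rewrite <- Hside by auto. unfold gdist.
    destruct (Hper2 i) as [-> ->]. destruct (Hper2 (S i)) as [-> ->]. reflexivity. }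
  assert (Htmono : forall i, (i < n)%nat -> i <> w -> t i <= t (S i)).
  { intros i Hi Hiw. specialize (Hinc i Hi). unfold t.
    destruct (Nat.leb_spec i w); destruct (Nat.leb_spec (S i) w); try lia; lra. }
  set (P := fun k => ex * gx (t k) + ey * gy (t k)).
  assert (Htele : sum_first n (fun i => P (S i) - P i) = 0).
  { rewrite sum_first_tele. unfold P, t. replace (Nat.leb n w) with false by (symmetry; apply Nat.leb_gt; lia).
    replace (Nat.leb 0 w) with true by (symmetry; apply Nat.leb_le; lia).
    rewrite Hsn, Hs0. replace (2 * PI - 2 * PI) with 0 by ring. ring. }
  assert (Hgen : forall i, (i < n)%nat -> i <> w ->
     al * (1 - tau) * (lam * a i) <= (1 + tau) * (P (S i) - P i)).
  { intros i Hi Hiw.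
    set (u := t i). set (v := t (S i)). set (Dl := v - u).
    assert (HDl : 0 <= Dl) by (unfold Dl, u, v; pose proof (Htmono i Hi Hiw); lra).
    pose proof (Ht_small i ltac:(lia)) as Hu. pose proof (Ht_small (S i) ltac:(lia)) as Hv.
    fold u in Hu. fold v in Hv.
    assert (Hbet : forall c, Rmin u v <= c <= Rmax u v -> Rabs c < eta).
    { intros c Hc. apply Rabs_def2 in Hu. apply Rabs_def2 in Hv. apply Rabs_def1;
        unfold Rmin, Rmax in Hc; repeat destruct Rle_dec; lra. }
    assert (MX : Rabs (gx v - gx u - ex * Dl) <= om * Rabs Dl).
    { apply (mvt_bound gx gx' u v ex om).
      - intros c _. apply Hdx.
      - intros c Hc. specialize (Hbet c Hc). apply Rlt_le. apply Hcx0. rewrite Rminus_0_r. destruct Hetad; lra. }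
    assert (MY : Rabs (gy v - gy u - ey * Dl) <= om * Rabs Dl).
    { apply (mvt_bound gy gy' u v ey om).
      - intros c _. apply Hdy.
      - intros c Hc. specialize (Hbet c Hc). apply Rlt_le. apply Hcy0. rewrite Rminus_0_r. destruct Hetad; lra. }
    rewrite (Rabs_right Dl) in MX, MY by lra.
    set (X := gx v - gx u). set (Y := gy v - gy u).
    set (r1 := X - ex * Dl). set (r2 := Y - ey * Dl).
    fold X in MX. fold Y in MY. fold r1 in MX. fold r2 in MY.
    assert (E1 : Rabs (ex * r1) <= Rabs ex * (om * Dl)) by (rewrite Rabs_mult; apply Rmult_le_compat_l; auto using Rabs_pos).
    assert (E2 : Rabs (ey * r2) <= Rabs ey * (om * Dl)) by (rewrite Rabs_mult; apply Rmult_le_compat_l; auto using Rabs_pos).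
    pose proof (Rle_abs (ex * r1)). pose proof (Rle_abs (- (ex * r1))). rewrite Rabs_Ropp in H0.
    pose proof (Rle_abs (ey * r2)). pose proof (Rle_abs (- (ey * r2))). rewrite Rabs_Ropp in H2.
    assert (R1 : r1 ^ 2 <= (om * Dl) ^ 2).
    { rewrite <- (pow2_abs r1). apply pow_incr. split; auto using Rabs_pos. }
    assert (R2 : r2 ^ 2 <= (om * Dl) ^ 2).
    { rewrite <- (pow2_abs r2). apply pow_incr. split; auto using Rabs_pos. }
    assert (Hexa : Rabs ex ^ 2 = ex ^ 2) by apply pow2_abs.
    assert (Heya : Rabs ey ^ 2 = ey ^ 2) by apply pow2_abs.
    assert (HQ : X ^ 2 + Y ^ 2 <= (al * (1 + tau) * Dl) ^ 2).
    { replace X with (ex * Dl + r1) by (unfold r1; ring). replace Y with (ey * Dl + r2) by (unfold r2; ring).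
      assert (om * om <= om) by nra.
      assert (Hb : om * beta * (Dl * Dl) + om * om * (Dl * Dl) <= tau * al2 * (Dl * Dl)).
      { assert (om * beta + om * om <= tau * al2) by nra. nra. }
      replace ((al * (1 + tau) * Dl) ^ 2) with (al2 * (1 + tau) ^ 2 * (Dl * Dl)) by (rewrite <- Halal; ring).
      unfold beta in Hb. unfold al2 in *. nra. }
    assert (Hd : sqrt (X ^ 2 + Y ^ 2) <= al * (1 + tau) * Dl).
    { apply sqrt_le_of_sq; auto. apply Rmult_le_pos; [|lra]. apply Rmult_le_pos; lra. }
    assert (HP : P (S i) - P i = ex * X + ey * Y) by (unfold P, X, Y; fold u v; ring).
    assert (HPl : al2 * (1 - tau) * Dl <= ex * X + ey * Y).
    { replace (ex * X + ey * Y) with (al2 * Dl + ex * r1 + ey * r2) by (unfold r1, r2, al2; ring).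
      assert (om * beta <= tau * al2) by nra. unfold beta in H3. nra. }
    rewrite HP, (Hside2 i Hi). fold u v X Y.
    apply Rle_trans with (al * (1 - tau) * (al * (1 + tau) * Dl)).
    - apply Rmult_le_compat_l; auto. apply Rmult_le_pos; lra.
    - replace (al * (1 - tau) * (al * (1 + tau) * Dl)) with ((1 + tau) * (al2 * (1 - tau) * Dl)) by (rewrite <- Halal; ring).
      apply Rmult_le_compat_l; lra. }
  assert (Hwb : - (P (S w) - P w) <= al * (lam * a w)).
  { rewrite (Hside2 w Hw). set (X := gx (t (S w)) - gx (t w)). set (Y := gy (t (S w)) - gy (t w)).
    assert (HP : P (S w) - P w = ex * X + ey * Y) by (unfold P, X, Y; ring).
    rewrite HP.
    assert (HCS : (ex * X + ey * Y) ^ 2 <= al2 * (X ^ 2 + Y ^ 2)).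
    { unfold al2. assert (0 <= (ex * Y - ey * X) ^ 2) by apply pow2_ge_0. nra. }
    assert (Hs : al * sqrt (X ^ 2 + Y ^ 2) = sqrt (al2 * (X ^ 2 + Y ^ 2))).
    { unfold al. rewrite sqrt_mult; auto. lra. apply Rplus_le_le_0_compat; apply pow2_ge_0. }
    rewrite Hs.
    apply Rle_trans with (Rabs (ex * X + ey * Y)).
    - rewrite <- Rabs_Ropp. apply Rle_abs.
    - rewrite <- (sqrt_pow2 (Rabs (ex * X + ey * Y))) by apply Rabs_pos.
      apply sqrt_le_1_alt. rewrite pow2_abs. exact HCS. }
  set (f := fun i => (al * (1 - tau) * lam) * a i).
  set (g := fun i => (1 + tau) * (P (S i) - P i)).
  assert (Hfg : msum n f w <= msum n g w).
  { apply msum_le. intros i Hi Hiw. unfold f, g. specialize (Hgen i Hi Hiw). lra. }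
  rewrite <- (Rplus_0_l (msum n f w)) in Hfg.
  assert (Ef : sum_first n f = f w + msum n f w) by (apply sum_split_w; auto).
  assert (Eg : sum_first n g = g w + msum n g w) by (apply sum_split_w; auto).
  assert (Sf : sum_first n f = al * (1 - tau) * lam * Sig) by (unfold f; apply sum_first_scal).
  assert (Sg : sum_first n g = 0) by (unfold g; rewrite sum_first_scal, Htele; ring).
  rewrite Sf in Ef. rewrite Sg in Eg.
  assert (gw : g w = (1 + tau) * (P (S w) - P w)) by reflexivity.
  assert (fw : f w = al * (1 - tau) * lam * a w) by reflexivity.
  assert (Hkey : al * (1 - tau) * lam * (Sig - a w) <= (1 + tau) * (al * (lam * a w))).
  { assert (msum n g w = - ((1 + tau) * (P (S w) - P w))) by lra.
    assert (msum n f w = al * (1 - tau) * lam * (Sig - a w)) by lra.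
    assert ((1 + tau) * - (P (S w) - P w) <= (1 + tau) * (al * (lam * a w))) by (apply Rmult_le_compat_l; lra).
    lra. }
  assert (Hkey2 : (1 - tau) * (Sig - a w) <= (1 + tau) * a w).
  { apply Rmult_le_reg_l with (al * lam). apply Rmult_lt_0_compat; lra.
    replace (al * lam * ((1 - tau) * (Sig - a w))) with (al * (1 - tau) * lam * (Sig - a w)) by ring.
    replace (al * lam * ((1 + tau) * a w)) with ((1 + tau) * (al * (lam * a w))) by ring. exact Hkey. }
  specialize (Hmarg w Hw). specialize (Hapos w Hw).
  assert ((1 - tau) * ((1 + kap) * a w) <= (1 - tau) * (Sig - a w)) by (apply Rmult_le_compat_l; lra).
  assert (Hp : 0 < kap - 2 * tau - tau * kap) by nra.
  assert (0 < (kap - 2 * tau - tau * kap) * a w) by (apply Rmult_lt_0_compat; lra).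
  nra.
Qed.

Theorem theorem1p6 :
  forall (gx gy gx' gy' : R -> R) (n : nat),
    C1_jordan_param gx gy gx' gy' ->
    (3 <= n)%nat ->
    exists N : (nat -> R) -> Prop,
      lebesgue_null n N /\
      forall a : nat -> R, in_W n a -> ~ N a ->
        exists L : list (list R * R),
          forall (sigma : list R) (lam : R),
            neat_config gx gy n a sigma lam -> In (sigma, lam) L.
Proof.
  intros gx gy gx' gy' n HC Hn3.
  pose proof HC as (Hdx & Hdy & Hcx & Hcy & _).
  assert (Hn1 : (1 <= n)%nat) by lia.
  set (Sz := fun J : nat => INR J + 8).
  set (Bad := fun (J : nat) (y : nat -> R) => forall l : list (nat -> R), exists x,
     inK n (Sz J) x /\ canon n x /\ (forall i, (i < n)%nat -> Gt gx gy n x i = y i) /\ ~ In x l).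
  set (SS := fun (J : nat) (a : nat -> R) => (forall i, (i < n)%nat -> / INR (S J) <= a i) /\ Bad J (fun i => a i ^ 2)).
  exists (fun a => exists J, SS J a). split.
  - apply union_null. intros J.
    assert (HSz : 8 <= Sz J) by (unfold Sz; pose proof (pos_INR J); lra).
    destruct (Gt_hyps gx gy gx' gy' Hdx Hdy Hcx Hcy n (Sz J) Hn1 HSz) as (L & HL & HLip & HDiff).
    apply transport_sq.
    + apply Rinv_0_lt_compat, lt_0_INR; lia.
    + apply (sard_finnull n (Sz J) L (Gt gx gy n)); auto; try lia; lra.
  - intros a HW HnN.
    destruct (collapse gx gy gx' gy' n a HC Hn1 HW) as (Lam & HLam & HLamb).
    destruct HW as [Hapos Hatri].
    destruct (margin_exists n a Hapos) as (km & Hkm & Hk2).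
    destruct (nat_above (Rmax (/ Lam ^ 2) (/ km))) as (J & HJ1 & _).
    { apply Rlt_le. eapply Rlt_le_trans; [|apply Rmax_r]. apply Rinv_0_lt_compat; auto. }
    assert (HJa : forall i, (i < n)%nat -> / INR (S J) <= a i).
    { intros i Hi. eapply Rle_trans; [|apply (Hk2 i Hi)].
      assert (/ km <= INR J) by (eapply Rle_trans; [apply Rmax_r| exact HJ1]).
      rewrite S_INR. rewrite <- (Rinv_inv km). apply Rinv_le_contravar; [apply Rinv_0_lt_compat; auto| lra]. }
    assert (HJL : / Lam ^ 2 <= INR J) by (eapply Rle_trans; [apply Rmax_l| exact HJ1]).
    assert (HnBad : ~ Bad J (fun i => a i ^ 2)).
    { intros HB. apply HnN. exists J. split; auto. }
    unfold Bad in HnBad. apply not_all_ex_not in HnBad. destruct HnBad as [l Hl].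
    assert (Hl' : forall x, inK n (Sz J) x -> canon n x -> (forall i, (i < n)%nat -> Gt gx gy n x i = a i ^ 2) -> In x l).
    { intros x H1 H2 H3. apply NNPP. intros H4. apply Hl. exists x. auto. }
    exists (map (fun x => (map (sx n x) (seq 0 (S n)), / sqrt (x (n - 1)%nat))) l).
    intros sigma lam Hconf.
    pose proof (HLamb sigma lam Hconf) as HlamL.
    destruct Hconf as (Hlen & Hs0 & Hsn & Hinc & Hlam & Hside).
    set (s := fun k => nth k sigma 0).
    change (s O = 0) in Hs0. change (s n = 2 * PI) in Hsn.
    change (forall i, (i < n)%nat -> s i < s (S i)) in Hinc.
    change (forall i, (i < n)%nat -> gdist gx gy (s (S i)) (s i) = lam * a i) in Hside.
    assert (Hmono : forall i j, (i <= j)%nat -> (j <= n)%nat -> s i <= s j).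
    { intros i j Hij Hjn. induction Hij; [lra|]. specialize (Hinc m ltac:(lia)). specialize (IHHij ltac:(lia)). lra. }
    assert (Hsrange : forall k, (k <= n)%nat -> 0 <= s k <= 2 * PI).
    { intros k Hk. split; [rewrite <- Hs0; apply Hmono; lia| rewrite <- Hsn; apply Hmono; lia]. }
    set (x := fun k => if Nat.ltb k (n - 1) then s (S k) else if Nat.eqb k (n - 1) then / lam ^ 2 else 0).
    assert (Hxn : x (n - 1)%nat = / lam ^ 2).
    { unfold x. rewrite (proj2 (Nat.ltb_ge _ _)) by lia. rewrite Nat.eqb_refl. reflexivity. }
    assert (Hsx : forall k, (k <= n)%nat -> sx n x k = s k).
    { intros k Hk. unfold sx. destruct (Nat.eqb_spec k 0); [subst; auto|].
      destruct (Nat.eqb_spec k n); [subst; auto|]. unfold x. rewrite (proj2 (Nat.ltb_lt _ _)) by lia.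
      f_equal; lia. }
    assert (HxIn : In x l).
    { apply Hl'.
      - intros k Hk. pose proof PI_bounds. pose proof (pos_INR J). unfold x, Sz.
        destruct (Nat.ltb_spec k (n - 1)).
        + pose proof (Hsrange (S k) ltac:(lia)). lra.
        + rewrite (proj2 (Nat.eqb_eq k (n - 1))) by lia.
          assert (0 < lam ^ 2) by (apply pow_lt; lra).
          assert (/ lam ^ 2 <= / Lam ^ 2).
          { apply Rinv_le_contravar; [apply pow_lt; lra|]. apply pow_incr; lra. }
          split; [apply Rlt_le, Rinv_0_lt_compat; auto| lra].
      - intros k Hk. unfold x. rewrite (proj2 (Nat.ltb_ge _ _)) by lia.
        rewrite (proj2 (Nat.eqb_neq _ _)) by lia. reflexivity.
      - intros i Hi. unfold Gt. rewrite Hxn, Hsx, Hsx by lia.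
        assert (HQ : Qf gx gy (s (S i)) (s i) = (lam * a i) ^ 2).
        { rewrite <- (Hside i Hi). unfold gdist, Qf. rewrite pow2_sqrt; auto.
          apply Rplus_le_le_0_compat; apply pow2_ge_0. }
        rewrite HQ. field. lra. }
    apply in_map_iff. exists x. split; [|exact HxIn].
    f_equal.
      * apply (nth_ext _ _ (sx n x 0) 0).
        { rewrite length_map, length_seq; auto. }
        intros k Hk. rewrite length_map, length_seq in Hk.
        rewrite map_nth, seq_nth by auto. simpl. rewrite Hsx by lia. reflexivity.
      * rewrite Hxn. rewrite sqrt_inv, sqrt_pow2 by lra. apply Rinv_inv.
Qed.
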